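(* Let $\langle\mathcal{P},\mathcal{S}\rangle$ be an ADP problem, let $\alpha\in\mathcal{S}$, and let $\mathrm{Pre}(\alpha)$ be the set of all ADPs $\beta\in\mathcal{P}$ such that the $\mathcal{P}$-dependency graph has an edge from some node in $\mathrm{dp}^\bot(\beta)$ to some node in $\mathrm{dp}^\bot(\alpha)$. If $\mathrm{Pre}(\alpha)\cap\mathcal{S}=\emptyset$, then the processor $\mathrm{Proc}_{\mathtt{KP}}(\langle\mathcal{P},\mathcal{S}\rangle)=(\mathrm{Pol}_0,\{\langle\mathcal{P},\mathcal{S}\setminus\{\alpha\}\rangle\})$ is sound.
   Context: Annotated dependency pairs (ADPs): over a finite signature $\Sigma$ with fresh annotated copies $f^\sharp$ of the defined symbols, an ADP is $\ell\to\{p_1:r_1,\dots,p_k:r_k\}^m$ with $\ell$ a non-variable unannotated term, $r_j$ possibly annotated, $\mathcal{V}(r_j)\subseteq\mathcal{V}(\ell)$, $0<p_j\le1$, $\sum p_j=1$, flag $m\in\{\mathsf{true},\mathsf{false}\}$. For a set $\mathcal{P}$, defined symbols are roots of left-hand sides; basic terms are $f(t_1,\dots,t_k)$ with $f$ defined, $t_i$ free of defined symbols; $|t|$ term size; $\flat$ removes annotations; $t^\sharp$ annotates the root; $\flat^\uparrow_\pi$ removes annotations strictly above $\pi$; $t\trianglelefteq_\sharp s$ means $t=\flat(s|_\pi)$ for a position $\pi$ of $s$ carrying an annotated symbol. Rewriting with $\mathcal{P}$ (innermost): at a position $\pi$ with defined or annotated symbol, ADP $\ell\to\{p_j:r_j\}^m\in\mathcal{P}$,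 $\sigma$ with $\flat(s|_\pi)=\ell\sigma$ whose proper subterms are normal forms: $t_j=s[r_j\sigma]_\pi$ (at: $m=\mathsf{true}$, $\pi$ annotated), $s[\flat(r_j)\sigma]_\pi$ (nt), $\flat^\uparrow_\pi(s[r_j\sigma]_\pi)$ (af), $\flat^\uparrow_\pi(s[\flat(r_j)\sigma]_\pi)$ (nf). A term is in argument normal form w.r.t. $\mathcal{P}$ if all its proper subterms are normal forms. $\mathcal{P}$-chain trees: possibly infinite finitely-branching trees with nodes $(p_v:t_v)$, root probability 1, $t_v$ rewriting to $\{\tfrac{p_w}{p_v}:t_w\}_w$ at inner nodes. For $\mathcal{S}\subseteq\mathcal{P}$, $\operatorname{edl}_{\langle\mathcal{P},\mathcal{S}\rangle}(\mathfrak{T})$ sums $p_v$ over inner nodes rewritten by (at)/(af)-steps with ADPs in $\mathcal{S}$; $\operatorname{edh}_{\langle\mathcal{P},\mathcal{S}\rangle}(t)$ = sup over chain trees rooted at $t^\sharp$; $\iota_{\langle\mathcal{P},\mathcal{S}\rangle}=\iota(n\mapsto\sup\{\operatorname{edh}_{\langle\mathcal{P},\mathcal{S}\rangle}(t)\mid t\text{ basic},|t|\le n\})$; complexities $\mathfrak{C}=\{\mathrm{Pol}_0,\mathrm{Pol}_1,\dots,\mathrm{Exp},\mathrm{2\text{-}Exp},\mathrm{Fin},\omega\}$ ordered in that order, $\oplus$ = maximum, $\iota(f)=\mathrm{Pol}_a$ for least $a$ with $f\in O(n^a)$, else $\mathrm{Exp}$ if $f\in O(2^{\mathrm{pol}(n)})$,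 else $\mathrm{2\text{-}Exp}$ if $f\in O(2^{2^{\mathrm{pol}(n)}})$, else $\mathrm{Fin}$ if $f$ never equals $\omega$, else $\omega$. Dependency graph: $\mathrm{np}(\mathcal{P})=\{\ell\to\flat(r_j)\mid\ell\to\{p_1:r_1,\dots,p_k:r_k\}^{\mathsf{true}}\in\mathcal{P}\}$. For $\alpha=\ell\to\{p_1:r_1,\dots,p_k:r_k\}^m$: $\mathrm{dp}(\alpha)=\{\ell^\sharp\to t^\sharp\mid1\le j\le k,t\trianglelefteq_\sharp r_j\}$; $\mathrm{dp}^\bot(\alpha)=\{\ell^\sharp\to\bot\}$ (fresh $\bot$) if $\mathrm{dp}(\alpha)=\emptyset$, else $\mathrm{dp}(\alpha)$; $\mathrm{dp}(\mathcal{P})=\bigcup_{\alpha\in\mathcal{P}}\mathrm{dp}^\bot(\alpha)$. The $\mathcal{P}$-dependency graph has nodes $\mathrm{dp}(\mathcal{P})$ and an edge from $\ell_1^\sharp\to t_1^\sharp$ to $\ell_2^\sharp\to\dots$ iff there are substitutions $\sigma_1,\sigma_2$ such that $t_1^\sharp\sigma_1$ reduces in zero or more innermost $\mathrm{np}(\mathcal{P})$-steps to $\ell_2^\sharp\sigma_2$ and $\ell_1^\sharp\sigma_1,\ell_2^\sharp\sigma_2$ are in argument normal form w.r.t. $\mathcal{P}$. ADP problems, proof trees, soundness: ADP problem $\langle\mathcal{P},\mathcal{S}\rangle$, $\mathcal{P}$ finite, $\mathcal{S}\subseteq\mathcal{P}$, solved iff $\mathcal{S}=\emptyset$. A processor maps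 an ADP problem to $(c,\{\langle\mathcal{P}_1,\mathcal{S}_1\rangle,\dots,\langle\mathcal{P}_n,\mathcal{S}_n\rangle\})$. A proof tree is a finite tree with labels $L_{\mathcal{A}}$ (ADP problems), $L_{\mathcal{C}}$ (complexities) where each inner node and its children arise by a processor application and leaves carry $\mathrm{Pol}_0$ if solved, $\omega$ otherwise; it is well formed if for each node $v$ with $L_{\mathcal{A}}(v)=\langle\mathcal{P},\mathcal{S}\rangle$ and root path $v_1,\dots,v_k=v$: $\iota_{\langle\mathcal{P},\mathcal{S}\rangle}\sqsubseteq L_{\mathcal{C}}(v_1)\oplus\dots\oplus L_{\mathcal{C}}(v_{k-1})\oplus\max\{L'_{\mathcal{C}}(w)\mid w$ reachable from $v$, incl. $v\}$ and $\iota_{\langle\mathcal{P},\mathcal{P}\setminus\mathcal{S}\rangle}\sqsubseteq L_{\mathcal{C}}(v_1)\oplus\dots\oplus L_{\mathcal{C}}(v_{k-1})$ ($L'_{\mathcal{C}}=L_{\mathcal{C}}$ on inner nodes, $\iota_{L_{\mathcal{A}}(w)}$ on leaves). A processor with output $(c,\{\langle\mathcal{P}_i,\mathcal{S}_i\rangle\}_{i\le n})$ on $\langle\mathcal{P},\mathcal{S}\rangle$ is sound if for every well-formed proof tree and node $v$ labeled $\langle\mathcal{P},\mathcal{S}\rangle$ with root path $v_1,\dots,v_k=v$: $\iota_{\langle\mathcal{P},\mathcal{S}\rangle}\sqsubseteq L_{\mathcal{C}}(v_1)\oplus\dots\oplus L_{\mathcal{C}}(v_{k-1})\oplus c\oplus\iota_{\langle\mathcal{P}_1,\mathcal{S}_1\rangle}\oplus\dots\oplus\iota_{\langle\mathcal{P}_n,\mathcal{S}_n\rangle}$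 and $\iota_{\langle\mathcal{P}_i,\mathcal{P}_i\setminus\mathcal{S}_i\rangle}\sqsubseteq L_{\mathcal{C}}(v_1)\oplus\dots\oplus L_{\mathcal{C}}(v_{k-1})\oplus c$ for all $i$. *)

(* Defs.v *)
From Stdlib Require List.
From HB Require Import structures.
From mathcomp Require Import all_boot all_order all_algebra.
From mathcomp Require Import boolp classical_sets cardinality reals ereal.
Set Implicit Arguments. Unset Strict Implicit. Unset Printing Implicit Defensive.
Import Order.TTheory GRing.Theory Num.Theory.

Local Open Scope classical_set_scope.
Local Open Scope ring_scope.

Inductive cplx := Pol of nat | CExp | C2Exp | CFin | COmega.

Definition cle (c d : cplx) : bool :=
  match c, d with
  | Pol a, Pol b => (a <= b)%N
  | Pol _, _ => true
  | CExp, Pol _ => false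
  | CExp, _ => true
  | C2Exp, Pol _ => false
  | C2Exp, CExp => false
  | C2Exp, _ => true
  | CFin, CFin => true
  | CFin, COmega => true
  | CFin, _ => false
  | COmega, COmega => true
  | COmega, _ => false
  end.

Definition cmax (c d : cplx) : cplx := if cle c d then d else c.

(* Terms over a finite signature [sym] with arities [ar]; the symbols
   satisfying [dsym] are the defined symbols having annotated copies f^#.
   A node [App f b ts] is annotated iff [b = true]. *)
Inductive term (sym : Type) := Var of nat | App of sym & bool & seq (term sym).
Arguments Var {sym}.

Section Terms.
Variable sym : finType.
Variable ar : sym -> nat.
Variable dsym : pred sym.
Notation term := (term sym).

Fixpoint wf (t : term) : bool :=
  match t with
  | Var _ => true
  | App f b ts => [&& size ts == ar f, b ==> dsym f & all wf ts]
  end.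

Fixpoint unann (t : term) : bool :=
  match t with Var _ => true | App _ b ts => ~~ b && all unann ts end.

Fixpoint flat (t : term) : term :=
  match t with Var x => Var x | App f _ ts => App f false (map flat ts) end.

Definition sharp (t : term) : term :=
  match t with Var x => Var x | App f _ ts => App f true ts end.

Fixpoint subst (s : nat -> term) (t : term) : term :=
  match t with Var x => s x | App f b ts => App f b (map (subst s) ts) end.

Fixpoint occurs (x : nat) (t : term) : bool :=
  match t with Var y => y == x | App _ _ ts => has (occurs x) ts end.

Fixpoint tsize (t : term) : nat :=
  match t with Var _ => 1 | App _ _ ts => (sumn (map tsize ts)).+1 end.

Fixpoint symbols (t : term) : seq sym :=
  match t with Var _ => [::] | App f _ ts => f :: flatten (map symbols ts) end.

Definition root (t : term) : option sym :=
  match t with Var _ => None | App f _ _ => Some f end.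

Fixpoint subt (t : term) (p : seq nat) : option term :=
  match p with
  | [::] => Some t
  | i :: p' =>
      match t with
      | Var _ => None
      | App _ _ ts => if (i < size ts)%N then subt (nth (Var 0) ts i) p' else None
      end
  end.

Fixpoint repl (t : term) (p : seq nat) (u : term) : term :=
  match p with
  | [::] => u
  | i :: p' =>
      match t with
      | Var _ => t
      | App f b ts => App f b (set_nth (Var 0) ts i (repl (nth (Var 0) ts i) p' u))
      end
  end.

Fixpoint flat_above (p : seq nat) (t : term) : term :=
  match p with
  | [::] => t
  | i :: p' =>
      match t with
      | Var _ => t
      | App f _ ts => App f false (set_nth (Var 0) ts i (flat_above p' (nth (Var 0) ts i)))
      end
  end.

Definition is_annot_root (t : term) : bool :=
  match t with App _ b _ => b | Var _ => false end.

Definition annot_at (s : term) (p : seq nat) : bool :=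
  match subt s p with Some u => is_annot_root u | None => false end.

Definition sharp_sub (t s : term) : Prop :=
  exists p u, subt s p = Some u /\ is_annot_root u /\ t = flat u.

(* Annotated dependency pairs  l -> {p1:r1, ..., pk:rk}^m              *)
Variable R : realType.

Record adp := ADP { lhs : term; rhs : seq (R * term); flag : bool }.

Definition adp_ok (a : adp) : Prop :=
  [/\ (exists f ts, lhs a = App f false ts), wf (lhs a), unann (lhs a),
      (forall pr, List.In pr (rhs a) ->
         [/\ 0 < pr.1, pr.1 <= 1, wf pr.2 &
             forall x, occurs x pr.2 -> occurs x (lhs a)]) &
      \sum_(pr <- rhs a) pr.1 = 1].

Definition problem_ok (P S : set adp) : Prop :=
  [/\ finite_set P, S `<=` P & forall a, P a -> adp_ok a].

Definition defined (P : set adp) (f : sym) : Prop :=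
  exists a, P a /\ root (lhs a) = Some f.

Definition basic (P : set adp) (t : term) : Prop :=
  [/\ wf t, unann t &
      exists f ts, [/\ t = App f false ts, defined P f &
        forall u g, List.In u ts -> g \in symbols u -> ~ defined P g]].

Definition reducible (P : set adp) (t : term) : Prop :=
  exists p u a sg, [/\ subt (flat t) p = Some u, P a & u = subst sg (lhs a)].

Definition nf (P : set adp) (t : term) : Prop := ~ reducible P t.

Definition argnf (P : set adp) (t : term) : Prop :=
  forall p u, p != [::] -> subt t p = Some u -> nf P u.

Definition adp_step (P : set adp) (a : adp) (pos : seq nat) (s : term)
    (res : seq (R * term)) : Prop :=
  P a /\ exists u sg,
    [/\ subt s pos = Some u,
        flat u = subst sg (lhs a),
        argnf P (flat u) &
        res = [seq (pr.1,
                   if annot_at s pos then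
                     (if flag a then repl s pos (subst sg pr.2)
                      else flat_above pos (repl s pos (subst sg pr.2)))
                   else
                     (if flag a then repl s pos (subst sg (flat pr.2))
                      else flat_above pos (repl s pos (subst sg (flat pr.2)))))
              | pr <- rhs a]].

(* P-chain trees: nodes are addresses (seq nat) of a possibly infinite,
   finitely branching tree; [ct_lab v = Some (p_v, t_v)]; [ct_nch v] is the
   number of children; inner nodes record the ADP and position of the step. *)
Record chain_tree := CT {
  ct_lab : seq nat -> option (R * term);
  ct_nch : seq nat -> nat;
  ct_rule : seq nat -> adp;
  ct_pos : seq nat -> seq nat }.

Definition is_chain_tree (P : set adp) (T : chain_tree) (t0 : term) : Prop :=
  [/\ ct_lab T [::] = Some (1, t0),
      (forall v i, ct_lab T (rcons v i) <> None <-> (ct_lab T v <> None /\ (i < ct_nch T v)%N)) &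
      (forall v p t, ct_lab T v = Some (p, t) -> (0 < ct_nch T v)%N ->
         exists res, [/\ adp_step P (ct_rule T v) (ct_pos T v) t res,
                         size res = ct_nch T v &
                         forall i, (i < size res)%N ->
                           ct_lab T (rcons v i) =
                             Some (p * (nth (0, Var 0) res i).1, (nth (0, Var 0) res i).2)])].

Definition counted (S : set adp) (T : chain_tree) (v : seq nat) : Prop :=
  exists p t, [/\ ct_lab T v = Some (p, t), (0 < ct_nch T v)%N, S (ct_rule T v)
                & annot_at t (ct_pos T v)].

Definition node_prob (T : chain_tree) (v : seq nat) : R :=
  if ct_lab T v is Some (p, _) then p else 0.

Local Open Scope ereal_scope.

(* edl_<P,S>(T) = sum of p_v over counted inner nodes (possibly infinite) *)
Definition edl (S : set adp) (T : chain_tree) : \bar R :=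
  ereal_sup [set \sum_(v <- l) (node_prob T v)%:E |
             l in [set l : seq (seq nat) | uniq l /\ forall v, v \in l -> counted S T v]].

Definition edh (P S : set adp) (t : term) : \bar R :=
  ereal_sup [set edl S T | T in [set T | is_chain_tree P T (sharp t)]].

Definition bigO (f : nat -> \bar R) (g : nat -> R) : Prop :=
  exists (c : R) (N : nat), forall n, (N <= n)%N -> f n <= (c * g n)%:E.

(* value of the polynomial with natural coefficients p (lowest first) *)
Definition polyval (p : seq nat) (n : nat) : nat :=
  foldr (fun a acc => a + n * acc)%N 0%N p.

Definition inPol (a : nat) (f : nat -> \bar R) : Prop := bigO f (fun n => (n%:R) ^+ a)%R.
Definition inExp (f : nat -> \bar R) : Prop :=
  exists p, bigO f (fun n => (2%:R) ^+ (polyval p n))%R.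
Definition in2Exp (f : nat -> \bar R) : Prop :=
  exists p, bigO f (fun n => (2%:R) ^+ (2 ^ polyval p n))%R.
Definition inFin (f : nat -> \bar R) : Prop := forall n, f n != +oo.

Lemma ex_inPol (f : nat -> \bar R) : (exists a, inPol a f) -> exists a, `[< inPol a f >].
Proof. by case=> a h; exists a; apply/asboolP. Qed.

Definition iota (f : nat -> \bar R) : cplx :=
  match pselect (exists a, inPol a f) with
  | left H => Pol (ex_minn (ex_inPol H))
  | right _ =>
    if `[< inExp f >] then CExp
    else if `[< in2Exp f >] then C2Exp
    else if `[< inFin f >] then CFin
    else COmega
  end.

Definition iota_prob (P S : set adp) : cplx :=
  iota (fun n => ereal_sup [set edh P S t | t in [set t | basic P t /\ (tsize t <= n)%N]]).

Local Close Scope ereal_scope.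

Definition dpnode := (term * option term)%type.   (* None = bottom *)

Definition np_rule (P : set adp) (l r : term) : Prop :=
  exists a, [/\ P a, flag a, lhs a = l &
    exists pr, List.In pr (rhs a) /\ r = flat pr.2].

Definition np_nf (P : set adp) (t : term) : Prop :=
  ~ exists p u l r sg, [/\ subt t p = Some u, np_rule P l r & u = subst sg l].

Definition np_step (P : set adp) (s s' : term) : Prop :=
  exists p u l r sg,
    [/\ subt s p = Some u, np_rule P l r, u = subst sg l,
        (forall q w, q != [::] -> subt u q = Some w -> np_nf P w) &
        s' = repl s p (subst sg r)].

Inductive np_star (P : set adp) : term -> term -> Prop :=
| np_refl s : np_star P s s
| np_trans s s' s'' : np_step P s s' -> np_star P s' s'' -> np_star P s s''.

Definition subst_ok (sg : nat -> term) : Prop := forall x, wf (sg x) && unann (sg x).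

Definition dp_edge (P : set adp) (n1 n2 : dpnode) : Prop :=
  match n1.2 with
  | None => False
  | Some t1 =>
      exists sg1 sg2, [/\ subst_ok sg1, subst_ok sg2,
        np_star P (subst sg1 t1) (subst sg2 n2.1),
        argnf P (subst sg1 n1.1) & argnf P (subst sg2 n2.1)]
  end.

Definition dp (a : adp) : set dpnode :=
  [set n | exists pr t, [/\ List.In pr (rhs a), sharp_sub t pr.2 &
                           n = (sharp (lhs a), Some (sharp t))]].

Definition dp_bot (a : adp) : set dpnode :=
  [set n | dp a n \/ (dp a = set0 /\ n = (sharp (lhs a), None))].

Definition Pre (P : set adp) (a : adp) : set adp :=
  [set b | P b /\ exists n1 n2, [/\ dp_bot b n1, dp_bot a n2 & dp_edge P n1 n2]].

Inductive ptree := PT of set adp & set adp & cplx & seq ptree.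

Fixpoint pt_at (T : ptree) (v : seq nat) : option ptree :=
  match v with
  | [::] => Some T
  | i :: v' => let: PT _ _ _ ch := T in
               if (i < size ch)%N then pt_at (nth T ch i) v' else None
  end.

(* L_C(v1) (+) ... (+) L_C(v_{k-1}) along the root path to v *)
Fixpoint anc (T : ptree) (v : seq nat) : cplx :=
  match v with
  | [::] => Pol 0
  | i :: v' => let: PT _ _ c ch := T in cmax c (anc (nth T ch i) v')
  end.

Fixpoint submax (T : ptree) : cplx :=
  let: PT P0 S0 c ch := T in
  if ch is [::] then iota_prob P0 S0 else foldr cmax c (map submax ch).

Definition is_proof_tree (T : ptree) : Prop :=
  (forall v P S c ch, pt_at T v = Some (PT P S c ch) -> problem_ok P S) /\
  (forall v P S c, pt_at T v = Some (PT P S c [::]) ->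
     (S = set0 -> c = Pol 0) /\ (S <> set0 -> c = COmega)).

Definition well_formed (T : ptree) : Prop :=
  forall v P S c ch, pt_at T v = Some (PT P S c ch) ->
    cle (iota_prob P S) (cmax (anc T v) (submax (PT P S c ch))) /\
    cle (iota_prob P (P `\` S)) (anc T v).

Definition sound_output (P S : set adp) (c : cplx) (outs : seq (set adp * set adp)) : Prop :=
  forall T, is_proof_tree T -> well_formed T ->
  forall v c' ch, pt_at T v = Some (PT P S c' ch) ->
    cle (iota_prob P S)
        (foldr cmax (cmax (anc T v) c) [seq iota_prob o.1 o.2 | o <- outs]) /\
    (forall Pi Si, List.In (Pi, Si) outs ->
       cle (iota_prob Pi (Pi `\` Si)) (cmax (anc T v) c)).

End Terms.

(* Main.v *)
Require Import Defs.
From mathcomp Require Import all_boot all_order all_algebra.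
From mathcomp Require Import boolp classical_sets cardinality reals ereal.
From mathcomp Require Import lra zify.
Set Implicit Arguments. Unset Strict Implicit. Unset Printing Implicit Defensive.
Import Order.TTheory GRing.Theory Num.Theory.

Fixpoint term_ind' (sym : finType) (Q : term sym -> Prop)
  (HV : forall x, Q (Var x))
  (HA : forall f b ts, (forall t, List.In t ts -> Q t) -> Q (App f b ts))
  (t : term sym) {struct t} : Q t :=
  match t with
  | Var x => HV x
  | App f b ts => HA f b ts
      ((fix go (l : seq (term sym)) : forall u, List.In u l -> Q u :=
          match l return forall u, List.In u l -> Q u with
          | nil => fun u (H : List.In u nil) => False_ind _ H
          | cons t0 l' => fun u (H : List.In u (t0 :: l')) =>
              match H with
              | or_introl E => eq_ind t0 Q (term_ind' HV HA t0) u E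
              | or_intror H' => go l' u H'
              end
          end) ts)
  end.

Lemma In_nth (T : Type) (x0 : T) (s : seq T) i : (i < size s)%N -> List.In (nth x0 s i) s.
Proof. elim: s i => [|x s IH] [|i] //= H; [by left | right; exact: IH]. Qed.

Lemma In_all (T : Type) (p : pred T) s x : all p s -> List.In x s -> p x.
Proof. elim: s => [|y s IH] //= /andP[py ps] [<-|H] //; exact: IH. Qed.

Lemma In_has (T : Type) (p : pred T) s x : List.In x s -> p x -> has p s.
Proof. elim: s => [|y s IH] //= [<-|H] px; first by rewrite px. by rewrite IH ?orbT. Qed.

Lemma has_In (T : Type) (p : pred T) s : has p s -> exists x, List.In x s /\ p x.
Proof. elim: s => [|y s IH] //= /orP[py|/IH[x [H1 H2]]]; [by exists y; split=> //; left | by exists x; split=> //; right]. Qed.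

Lemma all_In (T : Type) (p : pred T) s : (forall x, List.In x s -> p x) -> all p s.
Proof. elim: s => [|y s IH] //= H; rewrite H /=; [apply: IH => x Hx; apply: H; right | left] => //. Qed.


Lemma map_ext_In (T U : Type) (f g : T -> U) s :
  (forall x, List.In x s -> f x = g x) -> map f s = map g s.
Proof. elim: s => [|y s IH] //= H; rewrite H; [congr cons; apply: IH => x Hx; apply: H; right|left] => //. Qed.

Lemma has_ext_In (T : Type) (p q : pred T) s :
  (forall x, List.In x s -> p x = q x) -> has p s = has q s.
Proof. elim: s => [|y s IH] //= H; rewrite H; [congr orb; apply: IH => x Hx; apply: H; right|left] => //. Qed.

Lemma In_nth_ex (T : Type) (x0 : T) s x : List.In x s -> exists i, (i < size s)%N /\ nth x0 s i = x.
Proof.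
elim: s => [|y s IH] //= [<-|/IH [i [H1 H2]]]; first by exists 0%N.
by exists i.+1.
Qed.

Lemma all_set_nth (T : Type) (p : pred T) x0 s i y :
  all p s -> p y -> all p (set_nth x0 s i y) \/ (size s <= i)%N.
Proof.
elim: s i => [|x s IH] [|i] //=; try by right.
- by move=> /andP[_ ->] ->; left.
- move=> /andP[px ps] py; case: (IH i ps py) => [H|H]; [left; rewrite px H | right] => //.
Qed.

Definition pref (p q : seq nat) : bool := take (size p) q == p.

Lemma pref_nil q : pref [::] q. Proof. by rewrite /pref take0. Qed.
Lemma pref_cons i p j q : pref (i :: p) (j :: q) = (j == i) && pref p q.
Proof. by rewrite /pref /= eqseq_cons. Qed.
Lemma pref_nil_r p : pref p [::] = (p == [::]).
Proof. by case: p. Qed.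
Lemma pref_cat p d : pref p (p ++ d).
Proof. by rewrite /pref take_size_cat. Qed.
Lemma prefP p q : reflect (exists d, q = p ++ d) (pref p q).
Proof.
apply: (iffP idP) => [/eqP H|[d ->]]; last exact: pref_cat.
by exists (drop (size p) q); rewrite -{1}(cat_take_drop (size p) q) H.
Qed.


Lemma subt_cat (sym : finType) (t : term sym) p q :
  subt t (p ++ q) = if subt t p is Some u then subt u q else None.
Proof.
elim: p t => [|i p IH] [x|f b ts] //=.
by case: ifP => // _; exact: IH.
Qed.

Lemma subt_flat (sym : finType) (t : term sym) p : subt (flat t) p = omap (@flat sym) (subt t p).
Proof.
elim: p t => [|i p IH] [x|f b ts] //=.
by rewrite size_map; case: ifP => // H; rewrite (nth_map (Var 0)) // IH.
Qed.

Lemma flat_idem (sym : finType) (t : term sym) : flat (flat t) = flat t.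
Proof.
elim/term_ind': t => [x|f b ts IH] //=; rewrite -map_comp; congr App.
by apply: map_ext_In => x Hx /=; rewrite IH.
Qed.

Lemma subt_flat_fix (sym : finType) (t : term sym) p u : subt (flat t) p = Some u -> flat u = u.
Proof. by rewrite subt_flat; case: (subt t p) => // w [<-]; rewrite flat_idem. Qed.

Lemma unann_flat (sym : finType) (t : term sym) : unann t -> flat t = t.
Proof.
elim/term_ind': t => [x|f b ts IH] //= /andP[nb ua].
rewrite (negbTE nb); congr App; rewrite -[RHS]map_id.
apply: map_ext_In => x Hx; apply: IH => //; exact: In_all ua Hx.
Qed.

Lemma flat_unann (sym : finType) (t : term sym) : unann (flat t).
Proof.
elim/term_ind': t => [x|f b ts IH] //=; rewrite all_map; apply: all_In => x Hx /=; exact: IH.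
Qed.

Lemma flatfix_unann (sym : finType) (t : term sym) : flat t = t -> unann t.
Proof. by move=> <-; exact: flat_unann. Qed.

Lemma unann_subt (sym : finType) (t : term sym) p u : unann t -> subt t p = Some u -> unann u.
Proof.
elim: p t => [|i p IH] [x|f b ts] //=; try by move=> H [<-].
move=> /andP[_ ua]; case: ifP => // Hi; apply: IH; exact: In_all ua (In_nth _ Hi).
Qed.

Lemma occurs_flat (sym : finType) x (t : term sym) : occurs x (flat t) = occurs x t.
Proof.
elim/term_ind': t => [y|f b ts IH] //=; rewrite has_map; apply: has_ext_In => y Hy /=; exact: IH.
Qed.

Lemma occurs_subt (sym : finType) x (t : term sym) p u : subt t p = Some u -> occurs x u -> occurs x t.
Proof.
elim: p t => [|i p IH] [y|f b ts] //=; try by move=> [<-].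
case: ifP => // Hi Hs Ho; apply: (In_has (In_nth (Var 0) Hi)); exact: IH Hs Ho.
Qed.

Lemma occ_pos (sym : finType) x (t : term sym) sg : occurs x t -> exists p, subt (subst sg t) p = Some (sg x).
Proof.
elim/term_ind': t => [y|f b ts IH] /=; first by move=> /eqP ->; exists [::].
move=> /has_In [t0 [Hin Ho]]; have [p Hp] := IH _ Hin Ho.
have [i [Hi Hn]] := In_nth_ex (Var 0) Hin.
exists (i :: p) => /=; rewrite size_map Hi (nth_map (Var 0)) // Hn; exact: Hp.
Qed.

Lemma wf_subt (sym : finType) ar dsym (t : term sym) p u : wf ar dsym t -> subt t p = Some u -> wf ar dsym u.
Proof.
elim: p t => [|i p IH] [x|f b ts] //=; try by move=> H [<-].
move=> /and3P[_ _ wa]; case: ifP => // Hi; apply: IH; exact: In_all wa (In_nth _ Hi).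
Qed.

Lemma wf_flat (sym : finType) ar dsym (t : term sym) : wf ar dsym t -> wf ar dsym (flat t).
Proof.
elim/term_ind': t => [x|f b ts IH] //= /and3P[Hs Hb Ha].
rewrite size_map Hs /= all_map; apply: all_In => x Hx /=; apply: IH => //; exact: In_all Ha Hx.
Qed.

Lemma wf_subst (sym : finType) ar dsym (t : term sym) sg :
  wf ar dsym t -> (forall x, occurs x t -> wf ar dsym (sg x)) -> wf ar dsym (subst sg t).
Proof.
elim/term_ind': t => [x|f b ts IH] /=; first by move=> _ H; apply: H; rewrite eqxx.
move=> /and3P[Hs Hb Ha] Hsg; rewrite size_map Hs Hb /= all_map; apply: all_In => y Hy /=.
apply: IH => //; first exact: In_all Ha Hy.
move=> x Hx; apply: Hsg; exact: In_has Hy Hx.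
Qed.

Lemma wf_repl (sym : finType) ar dsym (t : term sym) p x :
  wf ar dsym t -> subt t p <> None -> wf ar dsym x -> wf ar dsym (repl t p x).
Proof.
elim: p t => [|i p IH] [y|f b ts] //= /and3P[Hs Hb Ha]; case: ifP => // Hi Hsub Hx.
rewrite size_set_nth (maxn_idPr Hi) Hs Hb /=.
have := all_set_nth (Var 0) i Ha (IH _ (In_all Ha (In_nth _ Hi)) Hsub Hx).
by case=> // H; rewrite leqNgt Hi in H.
Qed.

Lemma subt_repl_in (sym : finType) (t : term sym) p q u x :
  subt t p = Some u -> subt (repl t p x) (p ++ q) = subt x q.
Proof.
elim: p t => [|i p IH] [y|f b ts] //=; case: ifP => // Hi Hs.
by rewrite size_set_nth (maxn_idPr Hi) Hi nth_set_nth /= eqxx; apply: IH.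
Qed.

Lemma subt_repl_pre (sym : finType) (t : term sym) p q w x :
  subt t p = Some w -> subt (repl t (p ++ q) x) p = Some (repl w q x).
Proof.
elim: p t => [|i p IH] [y|f b ts] //=; [by move=> [->]|by move=> [->]|].
case: ifP => // Hi Hs.
by rewrite size_set_nth (maxn_idPr Hi) Hi nth_set_nth /= eqxx; apply: IH.
Qed.

Lemma subt_repl_par (sym : finType) (t : term sym) p pi x :
  subt t p <> None -> ~~ pref p pi -> ~~ pref pi p -> subt (repl t p x) pi = subt t pi.
Proof.
elim: p pi t => [|i p IH] pi t; first by rewrite pref_nil.
case: pi => [|j pi]; first by rewrite pref_nil.
case: t => [y|f b ts] //=; case: ifP => // Hi Hs.
rewrite !pref_cons size_set_nth (maxn_idPr Hi) nth_set_nth /=.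
case: eqP => [->|ne] /=.
- by rewrite Hi eqxx /= => H1 H2; apply: IH.
- by move=> _ _; case: ifP.
Qed.

Lemma annot_repl (sym : finType) (w : term sym) q x :
  q != [::] -> is_annot_root (repl w q x) = is_annot_root w.
Proof. by case: q => [|i q] // _; case: w. Qed.

Lemma subt_fa_np (sym : finType) (t : term sym) p pi :
  subt t p <> None -> ~ (exists d, d != [::] /\ p = pi ++ d) ->
  subt (flat_above p t) pi = subt t pi.
Proof.
elim: p pi t => [|i p IH] pi t //.
case: pi => [|j pi] H1 H2; first by exfalso; apply: H2; exists (i :: p).
case: t H1 => [y|f b ts] //= H1.
have Hi : (i < size ts)%N by move: H1; case: ifP.
rewrite Hi in H1.
rewrite size_set_nth (maxn_idPr Hi) nth_set_nth /=.
case: eqP => [Eji|ne] //=; rewrite Eji Hi; apply: IH => // -[d [Hd E]]; apply: H2.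
by exists d; rewrite E Eji.
Qed.

Lemma subt_fa_pre (sym : finType) (t : term sym) pi q :
  subt t (pi ++ q) <> None -> q != [::] ->
  exists w, subt (flat_above (pi ++ q) t) pi = Some w /\ is_annot_root w = false.
Proof.
elim: pi t => [|j pi IH] t /=.
- case: q => [|i q] // H _; case: t H => [y|f b ts] //= _; by exists (App f false (set_nth (Var 0) ts i (flat_above q (nth (Var 0) ts i)))).
- case: t => [y|f b ts] //=; case: ifP => // Hj Hs Hq.
  by rewrite size_set_nth (maxn_idPr Hj) Hj nth_set_nth /= eqxx; apply: IH.
Qed.

Lemma set_nth_nth (T : Type) (x0 : T) s i : (i < size s)%N -> set_nth x0 s i (nth x0 s i) = s.
Proof. elim: s i => [|x s IH] [|i] //= Hi; by rewrite IH. Qed.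

Lemma map_set_nth (T U : Type) (f : T -> U) x0 s i y :
  map f (set_nth x0 s i y) = set_nth (f x0) (map f s) i (f y).
Proof. by elim: s i => [|x s IH] [|i] //=; [by elim: i => //= i -> | rewrite IH]. Qed.

Lemma flat_fa (sym : finType) (t : term sym) p : subt t p <> None -> flat (flat_above p t) = flat t.
Proof.
elim: p t => [|i p IH] [y|f b ts] //=; case: ifP => // Hi Hs.
congr App; rewrite map_set_nth IH // -(nth_map (Var 0) (Var 0)) //.
by rewrite set_nth_nth // size_map.
Qed.

Lemma flat_repl (sym : finType) (t : term sym) p x :
  subt t p <> None -> flat (repl t p x) = repl (flat t) p (flat x).
Proof.
elim: p t => [|i p IH] [y|f b ts] //=; case: ifP => // Hi Hs.
congr App; rewrite map_set_nth IH // (nth_map (Var 0)) //.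
Qed.

Lemma subt_sharp (sym : finType) (t : term sym) p : p != [::] -> subt (sharp t) p = subt t p.
Proof. by case: p => [|i p] // _; case: t. Qed.

Lemma sharp_repl (sym : finType) (t : term sym) q x : q != [::] -> sharp (repl t q x) = repl (sharp t) q x.
Proof. by case: q => [|i q] // _; case: t. Qed.

Lemma flat_sharp (sym : finType) (t : term sym) : flat (sharp t) = flat t.
Proof. by case: t. Qed.

Lemma flat_subst (sym : finType) (t : term sym) sg :
  (forall x, occurs x t -> flat (sg x) = sg x) -> flat (subst sg t) = subst sg (flat t).
Proof.
elim/term_ind': t => [x|f b ts IH] /=; first by move=> H; apply: H; rewrite eqxx.
move=> H; congr App; rewrite -!map_comp; apply: map_ext_In => y Hy /=.
apply: IH => // x Hx; apply: H; exact: In_has Hy Hx.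
Qed.

Lemma fix_sg (sym : finType) (l : term sym) sg x :
  flat (subst sg l) = subst sg l -> occurs x l -> flat (sg x) = sg x.
Proof.
elim/term_ind': l => [y|f b ts IH] /=; first by move=> H /eqP <-.
move=> [_ E] /has_In [t0 [Hin Ho]].
have [i [Hi Hn]] := In_nth_ex (Var 0) Hin.
apply: (IH _ Hin _ Ho).
have := congr1 (fun s => nth (Var 0) s i) E; rewrite -map_comp.
by rewrite !(nth_map (Var 0)) //= Hn.
Qed.

Lemma subst_ann (sym : finType) (t : term sym) sg q w :
  (forall x, occurs x t -> unann (sg x)) -> subt (subst sg t) q = Some w -> is_annot_root w ->
  exists w0, [/\ subt t q = Some w0, w = subst sg w0 & is_annot_root w0].
Proof.
elim: q t => [|i q IH] [x|f b ts].
- move=> H /= [<-] Ha; have U : unann (sg x) by apply: H; rewrite /= eqxx.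
  by case: (sg x) U Ha => // g c us /= /andP[/negbTE ->].
- by move=> _ [<-] Ha; exists (App f b ts).
- move=> H Hs Ha; have U : unann (sg x) by apply: H; rewrite /= eqxx.
  have := unann_subt U Hs; clear IH; by case: w Ha Hs => // g c us /= -> _ /andP[].
- move=> H /=; rewrite size_map; case: ifP => // Hi Hs Ha.
  rewrite (nth_map (Var 0)) // in Hs; apply: IH Hs Ha => x Hx.
  apply: H; exact: In_has (In_nth _ Hi) Hx.
Qed.

Lemma subst_ext (sym : finType) (t : term sym) sg sg' :
  (forall x, occurs x t -> sg x = sg' x) -> subst sg t = subst sg' t.
Proof.
elim/term_ind': t => [x|f b ts IH] /=; first by move=> H; apply: H; rewrite eqxx.
move=> H; congr App; apply: map_ext_In => y Hy; apply: IH => // x Hx; apply: H; exact: In_has Hy Hx.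
Qed.

Definition kterm (sym : finType) (R : realType) (s : term sym) pos (a : adp sym R) sg (r : term sym) :=
  if annot_at s pos then
    (if flag a then repl s pos (subst sg r) else flat_above pos (repl s pos (subst sg r)))
  else
    (if flag a then repl s pos (subst sg (flat r)) else flat_above pos (repl s pos (subst sg (flat r)))).

Definition step_ok (sym : finType) (R : realType) (P : set (adp sym R)) a s pos u sg (pr : R * term sym) :=
  [/\ P a, subt s pos = Some u, flat u = subst sg (lhs a), argnf P (flat u) & List.In pr (rhs a)].

Lemma sg_fix (sym : finType) (R : realType) (a : adp sym R) (u : term sym) sg x :
  flat u = subst sg (lhs a) -> occurs x (lhs a) -> flat (sg x) = sg x.
Proof. move=> E; apply: fix_sg; by rewrite -E flat_idem. Qed.

Lemma sg_fix_r (sym : finType) ar dsym (R : realType) (a : adp sym R) (u : term sym) sg pr x :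
  adp_ok ar dsym a -> List.In pr (rhs a) ->
  flat u = subst sg (lhs a) -> occurs x pr.2 -> flat (sg x) = sg x.
Proof.
case=> _ _ _ Hr _ Hin E Hx; apply: (sg_fix E).
by have [_ _ _ ->] := Hr _ Hin.
Qed.

Lemma flat_subst_r (sym : finType) ar dsym (R : realType) (a : adp sym R) (u : term sym) sg pr :
  adp_ok ar dsym a -> List.In pr (rhs a) -> flat u = subst sg (lhs a) ->
  flat (subst sg pr.2) = subst sg (flat pr.2) /\ flat (subst sg (flat pr.2)) = subst sg (flat pr.2).
Proof.
move=> ok Hin E; split.
- apply: flat_subst => x Hx; exact: sg_fix_r ok Hin E Hx.
- rewrite flat_subst ?flat_idem // => x; rewrite occurs_flat => Hx; exact: sg_fix_r ok Hin E Hx.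
Qed.

Lemma subt_pos_some (sym : finType) (s : term sym) pos Y u :
  subt s pos = Some u -> subt (repl s pos Y) pos = Some Y.
Proof. move=> H; have := subt_repl_in [::] Y H; by rewrite cats0. Qed.

Lemma flat_kterm (sym : finType) ar dsym (R : realType) (P : set (adp sym R)) a s pos u sg pr :
  adp_ok ar dsym a -> step_ok P a s pos u sg pr ->
  flat (kterm s pos a sg pr.2) = repl (flat s) pos (subst sg (flat pr.2)).
Proof.
move=> ok [Pa Hs E _ Hin]; have [F1 F2] := flat_subst_r ok Hin E.
have Hn : subt s pos <> None by rewrite Hs.
rewrite /kterm; case: ifP => _; case: ifP => _;
  rewrite ?flat_fa ?flat_repl ?F1 ?F2 //; move/(subt_pos_some _) : Hs => -> //.
Qed.

Lemma nf_np_nf (sym : finType) (R : realType) (P : set (adp sym R)) (w : term sym) :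
  flat w = w -> nf P w -> np_nf P w.
Proof.
move=> Fw Hnf [p [u [l [r [sg [H1 [a [Pa _ <- _]] H3]]]]]]; apply: Hnf.
by exists p, u, a, sg; rewrite Fw.
Qed.

Lemma one_step (sym : finType) ar dsym (R : realType) (P : set (adp sym R)) a s pos u sg pr pi u' :
  adp_ok ar dsym a -> step_ok P a s pos u sg pr -> ~~ pref pos pi ->
  subt (kterm s pos a sg pr.2) pi = Some u' -> is_annot_root u' ->
  exists w, [/\ subt s pi = Some w, is_annot_root w &
     (sharp (flat w) = sharp (flat u') \/ np_step P (sharp (flat w)) (sharp (flat u')))].
Proof.
move=> ok st Hnp; have [Pa Hs E Harg Hin] := st.
have Hn : subt s pos <> None by rewrite Hs.
case: (boolP (pref pi pos)) => Hpp.
- move/prefP: Hpp => [q Eq].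
  have Hq : q != [::] by apply/negP => /eqP Eq0; move: Hnp; rewrite Eq Eq0 cats0 /pref take_size eqxx.
  rewrite Eq in Hs Hn; move: Hs; rewrite subt_cat; case Hw: (subt s pi) => [w|] // Hwq.
  rewrite /kterm Eq; case Hfl: (flag a) => /=.
  + set Y := (if annot_at s (pi ++ q) then subst sg pr.2 else subst sg (flat pr.2)).
    have -> : (if annot_at s (pi ++ q) then repl s (pi ++ q) (subst sg pr.2)
               else repl s (pi ++ q) (subst sg (flat pr.2))) = repl s (pi ++ q) Y by rewrite /Y; case: ifP.
    rewrite (subt_repl_pre _ _ Hw) => -[<-]; rewrite annot_repl // => Ha.
    exists w; split => //; right.
    exists q, (flat u), (lhs a), (flat pr.2), sg; split => //.
    * by rewrite subt_sharp // subt_flat Hwq.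
    * by exists a; split => //; exists pr; split.
    * move=> q' w' Hq' Hsub; apply: (nf_np_nf (subt_flat_fix Hsub)).
      exact: Harg Hq' Hsub.
    * have [F1 F2] := flat_subst_r ok Hin E.
      rewrite flat_repl ?Hwq // sharp_repl //; congr repl; rewrite /Y; case: ifP => _ //.
  + have Hn' : forall Y, subt (repl s (pi ++ q) Y) (pi ++ q) <> None.
      by move=> Y; move: Hn; case Hx: (subt s (pi ++ q)) => [x|] // _; rewrite (subt_pos_some Y Hx).
    case: ifP => _.
    * have [w0 [-> Hf]] := subt_fa_pre (Hn' (subst sg pr.2)) Hq.
      by move=> [<-]; rewrite Hf.
    * have [w0 [-> Hf]] := subt_fa_pre (Hn' (subst sg (flat pr.2))) Hq.
      by move=> [<-]; rewrite Hf.
- have Hnd : ~ (exists d, d != [::] /\ pos = pi ++ d).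
    by move=> [d [_ Ed]]; move: Hpp; rewrite Ed pref_cat.
  have HY : forall Y, subt (repl s pos Y) pos <> None by move=> Y; rewrite (subt_pos_some Y Hs).
  have Hsame : subt (kterm s pos a sg pr.2) pi = subt s pi.
    rewrite /kterm; case: ifP => _; case: ifP => _;
      rewrite ?(@subt_fa_np _ _ pos pi) ?(@subt_repl_par _ s pos pi) //.
  rewrite Hsame => Hs' Ha; exists u'; split => //; by left.
Qed.

Lemma annot_flat (sym : finType) (t : term sym) : is_annot_root (flat t) = false.
Proof. by case: t. Qed.

Lemma create_step (sym : finType) ar dsym (R : realType) (P : set (adp sym R)) a s pos u sg pr q u' :
  adp_ok ar dsym a -> step_ok P a s pos u sg pr ->
  subt (kterm s pos a sg pr.2) (pos ++ q) = Some u' -> is_annot_root u' ->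
  annot_at s pos /\ exists u0, [/\ subt pr.2 q = Some u0, is_annot_root u0 & flat u' = subst sg (flat u0)].
Proof.
move=> ok st; have [Pa Hs E Harg Hin] := st.
have HY : forall Y, subt (repl s pos Y) pos <> None by move=> Y; rewrite (subt_pos_some Y Hs).
have Hnd : ~ (exists d, d != [::] /\ pos = (pos ++ q) ++ d).
  move=> [d [Hd Ed]]; have := congr1 size Ed; rewrite !size_cat => Hsz.
  move: Hsz => /eqP; rewrite -{1}[size pos]addn0 -addnA eqn_add2l eq_sym addn_eq0 => /andP[_].
  by rewrite size_eq0 (negbTE Hd).
have Hk : subt (kterm s pos a sg pr.2) (pos ++ q) =
          subt (if annot_at s pos then subst sg pr.2 else subst sg (flat pr.2)) q.
  rewrite /kterm; case: ifP => _; case: ifP => _;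
    rewrite ?(@subt_fa_np _ _ pos (pos ++ q)) ?(subt_repl_in _ _ Hs) //.
have Hfix : forall x, occurs x pr.2 -> flat (sg x) = sg x by move=> x; exact: sg_fix_r ok Hin E.
rewrite Hk; case: ifP => Han Hsub Ha.
- have [u0 [H1 H2 H3]] := subst_ann (fun x Hx => flatfix_unann (Hfix x Hx)) Hsub Ha.
  split => //; exists u0; split => //; rewrite H2 flat_subst // => x Hx.
  apply: Hfix; exact: occurs_subt H1 Hx.
- have Hfix' : forall x, occurs x (flat pr.2) -> unann (sg x).
    by move=> x; rewrite occurs_flat => Hx; apply: flatfix_unann; exact: Hfix.
  have [w0 [H1 H2 H3]] := subst_ann Hfix' Hsub Ha.
  by move: H1; rewrite subt_flat; case: (subt pr.2 q) => // z [Ez]; rewrite -Ez annot_flat in H3.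
Qed.

Local Open Scope ring_scope.

Lemma lab_parent (sym : finType) (R : realType) (P : set (adp sym R)) T t v i :
  is_chain_tree P T t -> ct_lab T (rcons v i) <> None -> ct_lab T v <> None /\ (i < ct_nch T v)%N.
Proof. by case=> _ H _; move/H. Qed.

Lemma lab_prefix (sym : finType) (R : realType) (P : set (adp sym R)) T t v d :
  is_chain_tree P T t -> ct_lab T (v ++ d) <> None -> ct_lab T v <> None.
Proof.
move=> ct; elim/last_ind: d => [|d j IH]; first by rewrite cats0.
by rewrite -rcons_cat => /(lab_parent ct) [/IH].
Qed.

Lemma child_step (sym : finType) (R : realType) (P : set (adp sym R)) T t v i p s p' s' :
  is_chain_tree P T t -> ct_lab T v = Some (p, s) -> ct_lab T (rcons v i) = Some (p', s') ->
  exists u sg pr, [/\ step_ok P (ct_rule T v) s (ct_pos T v) u sg pr, p' = p * pr.1,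
                      s' = kterm s (ct_pos T v) (ct_rule T v) sg pr.2,
                      pr = nth (0, Var 0) (rhs (ct_rule T v)) i & (i < size (rhs (ct_rule T v)))%N].
Proof.
move=> ct Hv Hc; have [_ Hi] : ct_lab T v <> None /\ (i < ct_nch T v)%N.
  by apply: (lab_parent ct); rewrite Hc.
case: ct => _ _ /(_ v p s Hv (leq_ltn_trans (leq0n i) Hi)) [res [[Pa [u [sg [H1 H2 H3 Hres]]]] Hsz Hch]].
have Hi' : (i < size res)%N by rewrite Hsz.
move: (Hch i Hi'); rewrite Hc => -[-> ->].
have Hi2 : (i < size (rhs (ct_rule T v)))%N by move: Hi'; rewrite Hres size_map.
exists u, sg, (nth (0, Var 0) (rhs (ct_rule T v)) i).
rewrite Hres (nth_map (0, Var 0)) //; split => //; split => //; exact: In_nth.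
Qed.

Lemma child_probs (sym : finType) (R : realType) (P : set (adp sym R)) T t v p s :
  is_chain_tree P T t -> ct_lab T v = Some (p, s) -> (0 < ct_nch T v)%N ->
  [/\ P (ct_rule T v), size (rhs (ct_rule T v)) = ct_nch T v &
      forall i, (i < ct_nch T v)%N -> node_prob T (rcons v i) = p * (nth (0, Var 0) (rhs (ct_rule T v)) i).1].
Proof.
move=> ct Hv Hn; case: (ct) => _ _ /(_ v p s Hv Hn) [res [[Pa [u [sg [H1 H2 H3 Hres]]]] Hsz Hch]].
have Hsz2 : size (rhs (ct_rule T v)) = ct_nch T v by rewrite -Hsz Hres size_map.
split => // i Hi; have Hi' : (i < size res)%N by rewrite Hsz.
by rewrite /node_prob (Hch i Hi') Hres (nth_map (0, Var 0)) // Hsz2.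
Qed.

Definition good (sym : finType) ar dsym (R : realType) (P : set (adp sym R)) T (t0 : term sym) :=
  [/\ is_chain_tree P T (sharp t0), (forall a, P a -> adp_ok ar dsym a), wf ar dsym t0, unann t0 &
      exists f ts, t0 = App f false ts].

Lemma sg_wf (sym : finType) ar dsym (R : realType) (a : adp sym R) s pos (u : term sym) sg x :
  wf ar dsym (flat s) -> subt s pos = Some u -> flat u = subst sg (lhs a) -> occurs x (lhs a) ->
  wf ar dsym (sg x) /\ flat (sg x) = sg x.
Proof.
move=> Ws Hs E Hx; split; last exact: sg_fix E Hx.
have [p Hp] := occ_pos sg Hx; rewrite -E in Hp.
apply: (wf_subt Ws (p := pos ++ p)); by rewrite subt_cat subt_flat Hs.
Qed.

Lemma inv_tree (sym : finType) ar dsym (R : realType) (P : set (adp sym R)) T t0 v p s :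
  good ar dsym P T t0 -> ct_lab T v = Some (p, s) -> wf ar dsym (flat s) /\ 0 <= p.
Proof.
case=> ct ok W U _; elim/last_ind: v p s => [|v i IH] p s.
- case: (ct) => -> _ _ [<- <-]; rewrite flat_sharp unann_flat //.
- move=> Hc; have [Hv _] : ct_lab T v <> None /\ (i < ct_nch T v)%N by apply: (lab_parent ct); rewrite Hc.
  case Ev: (ct_lab T v) Hv => [[pv sv]|] // _.
  have [Wv Pv] := IH _ _ Ev.
  have [u [sg [pr [st -> -> _ _]]]] := child_step ct Ev Hc.
  have [Pa Hs E Harg Hin] := st; have oka := ok _ Pa.
  have [_ _ _ Hr _] := oka; have [Hp1 _ Wr Hvr] := Hr _ Hin.
  split; last by apply: mulr_ge0 => //; exact: ltW.
  rewrite (flat_kterm oka st); apply: wf_repl => //; first by rewrite subt_flat Hs.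
  apply: wf_subst; first exact: wf_flat.
  move=> x; rewrite occurs_flat => /Hvr Hx; exact: (sg_wf Wv Hs E Hx).1.
Qed.

Lemma np_star_snoc (sym : finType) (R : realType) (P : set (adp sym R)) a b c :
  np_star P a b -> (b = c \/ np_step P b c) -> np_star P a c.
Proof.
elim=> [s [<-|H]|s s' s'' H1 _ IH H]; first exact: np_refl.
- by apply: np_trans H (np_refl _ _).
- by apply: np_trans H1 (IH H).
Qed.

Lemma seg (sym : finType) ar dsym (R : realType) (P : set (adp sym R)) T t0 x d pi p s u :
  good ar dsym P T t0 ->
  (forall k, (k < size d)%N -> ~~ pref (ct_pos T (x ++ take k d)) pi) ->
  ct_lab T (x ++ d) = Some (p, s) -> subt s pi = Some u -> is_annot_root u ->
  exists p0 s0 u0, [/\ ct_lab T x = Some (p0, s0), subt s0 pi = Some u0, is_annot_root u0 &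
                       np_star P (sharp (flat u0)) (sharp (flat u))].
Proof.
move=> G; have [ct ok _ _ _] := G.
elim/last_ind: d p s u => [|d j IH] p s u Hk.
- rewrite cats0 => Hl Hs Ha; exists p, s, u; split => //; exact: np_refl.
- rewrite -rcons_cat => Hc Hs Ha.
  have [Hv _] : ct_lab T (x ++ d) <> None /\ (j < ct_nch T (x ++ d))%N by apply: (lab_parent ct); rewrite Hc.
  case Ev: (ct_lab T (x ++ d)) Hv => [[pv sv]|] // _.
  have [u1 [sg [pr [st _ Es _ _]]]] := child_step ct Ev Hc.
  have Hnp : ~~ pref (ct_pos T (x ++ d)) pi.
    by have := Hk (size d); rewrite size_rcons ltnSn -cats1 take_size_cat //; apply.
  rewrite Es in Hs.
  have [w [Hw Haw Hst]] := one_step (ok _ (let: And5 Pa _ _ _ _ := st in Pa)) st Hnp Hs Ha.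
  have Hk' : forall k, (k < size d)%N -> ~~ pref (ct_pos T (x ++ take k d)) pi.
    move=> k Hkd; have := Hk k; rewrite size_rcons ltnS (ltnW Hkd) -cats1 take_cat Hkd; apply => //.
  have [p0 [s0 [u0 [H1 H2 H3 H4]]]] := IH _ _ _ Hk' Ev Hw Haw.
  exists p0, s0, u0; split => //; exact: np_star_snoc H4 Hst.
Qed.

Local Close Scope ring_scope.
Local Open Scope classical_set_scope.
Local Open Scope ring_scope.

Lemma subst_sharp_ext (sym : finType) (t : term sym) sg sg' :
  (forall x, occurs x t -> sg x = sg' x) -> (exists f b ts, t = App f b ts) ->
  subst sg (sharp t) = sharp (subst sg' t).
Proof.
move=> H [f [b [ts Et]]]; have := subst_ext H; rewrite Et /= => -[E]; by rewrite E.
Qed.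

Lemma argnf_sharp (sym : finType) (R : realType) (P : set (adp sym R)) (t : term sym) :
  argnf P t -> argnf P (sharp t).
Proof. by move=> H p u Hp; rewrite subt_sharp //; exact: H. Qed.

Definition sgr (sym : finType) (l : term sym) (sg : nat -> term sym) x :=
  if occurs x l then sg x else Var x.

Lemma sgr_ok (sym : finType) ar dsym (R : realType) (a : adp sym R) s pos (u : term sym) sg :
  wf ar dsym (flat s) -> subt s pos = Some u -> flat u = subst sg (lhs a) ->
  subst_ok ar dsym (sgr (lhs a) sg).
Proof.
move=> W Hs E x; rewrite /sgr; case: ifP => Hx //.
have [W1 F1] := sg_wf W Hs E Hx; by rewrite W1 (flatfix_unann F1).
Qed.

Lemma edge_lemma (sym : finType) ar dsym (R : realType) (P : set (adp sym R)) b a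
    sv posv uv sg pr q u0 sw pw uw sgw :
  adp_ok ar dsym b -> adp_ok ar dsym a -> P b ->
  wf ar dsym (flat sv) -> subt sv posv = Some uv -> flat uv = subst sg (lhs b) -> argnf P (flat uv) ->
  List.In pr (rhs b) -> subt pr.2 q = Some u0 -> is_annot_root u0 ->
  wf ar dsym (flat sw) -> subt sw pw = Some uw -> flat uw = subst sgw (lhs a) -> argnf P (flat uw) ->
  np_star P (sharp (subst sg (flat u0))) (sharp (flat uw)) ->
  Pre ar dsym P a b.
Proof.
move=> okb oka Pb Wv Hv Ev Av Hin Hq Ha0 Ww Hw Ew Aw Hstar.
have okb' := okb; have okb'' := okb; case: okb' => [[fb [tsb Elb]] _ _ Hrb _].
case: oka => [[fa [tsa Ela]] _ _ _ _].
have [_ _ _ Hvr] := Hrb _ Hin.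
split => //.
have Hu0 : exists f c us, flat u0 = App f c us.
  by move: Ha0; case: (u0) => // f c us _; exists f, false, (map (@flat _) us).
set n1 := (sharp (lhs b), Some (sharp (flat u0))).
have Hn1 : dp_bot b n1.
  left; exists pr, (flat u0); split => //.
  by exists q, u0.
have [n2 [Hn2 E2]] : exists n2, dp_bot a n2 /\ n2.1 = sharp (lhs a).
  case: (pselect (exists n, dp a n)) => [[n Hn]|Hno].
  - exists n; split; first by left.
    by case: Hn => pr' [t' [_ _ ->]].
  - exists (sharp (lhs a), None); split => //; right; split => //.
    by apply/funext => n; apply/propext; split => // Hn; apply: Hno; exists n.
exists n1, n2; split => //.
rewrite /dp_edge /=.
exists (sgr (lhs b) sg), (sgr (lhs a) sgw); split.
- exact: sgr_ok Wv Hv Ev.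
- exact: sgr_ok Ww Hw Ew.
- rewrite E2 (@subst_sharp_ext _ (flat u0) _ sg).
  + rewrite (@subst_sharp_ext _ (lhs a) _ sgw) -?Ew //; last by exists fa, false, tsa.
    by move=> x Hx; rewrite /sgr Hx.
  + move=> x; rewrite occurs_flat => Hx; rewrite /sgr Hvr //; exact: occurs_subt Hq Hx.
  + done.
- rewrite (@subst_sharp_ext _ (lhs b) _ sg) -?Ev; first exact: argnf_sharp.
  + by move=> x Hx; rewrite /sgr Hx.
  + by exists fb, false, tsb.
- rewrite E2 (@subst_sharp_ext _ (lhs a) _ sgw) -?Ew; first exact: argnf_sharp.
  + by move=> x Hx; rewrite /sgr Hx.
  + by exists fa, false, tsa.
Qed.

Local Close Scope ring_scope.
Local Close Scope classical_set_scope.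
Local Open Scope classical_set_scope.
Local Open Scope ring_scope.

Fixpoint allpos (sym : finType) (t : term sym) : seq (seq nat) :=
  match t with
  | Var _ => [:: [::]]
  | App _ _ ts => [::] :: (fix go k (l : seq (term sym)) := match l with
                           | [::] => [::]
                           | t0 :: l' => [seq k :: q | q <- allpos t0] ++ go k.+1 l'
                           end) 0%N ts
  end.

Lemma allpos_mem (sym : finType) (t : term sym) q u : subt t q = Some u -> q \in allpos t.
Proof.
elim: q t => [|i q IH] [x|f b ts] //=; try by rewrite inE.
case: ifP => // Hi Hs; rewrite inE /=.
have := IH _ Hs; move: Hi; clear Hs; move: (Var 0) => x0; rewrite -[i in (i :: q)]add0n; move: 0%N => k.
elim: ts k i => [|t0 ts IHts] k i //=; case: i => [|i] Hi Hq.
- by rewrite addn0 mem_cat map_f.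
- by rewrite mem_cat addnS -addSn (IHts k.+1 i) ?orbT.
Qed.

Lemma step_data (sym : finType) (R : realType) (P : set (adp sym R)) T t w pw sw :
  is_chain_tree P T t -> ct_lab T w = Some (pw, sw) -> (0 < ct_nch T w)%N ->
  exists uw sgw, [/\ P (ct_rule T w), subt sw (ct_pos T w) = Some uw,
                     flat uw = subst sgw (lhs (ct_rule T w)) & argnf P (flat uw)].
Proof.
case=> _ _ H Hw Hn; have [res [[Pa [u [sg [H1 H2 H3 _]]]] _ _]] := H _ _ _ Hw Hn.
by exists u, sg.
Qed.

Lemma creator_counted (sym : finType) ar dsym (R : realType) (P S : set (adp sym R)) a T t0 w pw sw k :
  good ar dsym P T t0 -> Pre ar dsym P a `&` S = set0 ->
  ct_lab T w = Some (pw, sw) -> (0 < ct_nch T w)%N -> ct_rule T w = a -> annot_at sw (ct_pos T w) ->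
  (k < size w)%N -> pref (ct_pos T (take k w)) (ct_pos T w) ->
  (forall k', (k < k')%N -> (k' < size w)%N -> ~~ pref (ct_pos T (take k' w)) (ct_pos T w)) ->
  counted (P `\` S) T (take k w) /\
  exists q, [/\ ct_pos T w = ct_pos T (take k w) ++ q,
    q \in allpos (nth (0, Var 0) (rhs (ct_rule T (take k w))) (nth 0%N w k)).2 &
    (nth 0%N w k < size (rhs (ct_rule T (take k w))))%N].
Proof.
move=> G HPre Hw Hn Hr Han Hk Hpre Hmax; have [ct ok _ _ _] := G.
rewrite /annot_at in Han; case Esw: (subt sw (ct_pos T w)) Han => [uw|] // Ha.
have Ewxd : w = take k.+1 w ++ drop k.+1 w by rewrite cat_take_drop.
have Hseg : forall k'', (k'' < size (drop k.+1 w))%N ->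
    ~~ pref (ct_pos T (take k.+1 w ++ take k'' (drop k.+1 w))) (ct_pos T w).
  move=> k'' H; rewrite -takeD; apply: Hmax; first by rewrite addSn ltnS leq_addr.
  by rewrite size_drop in H; rewrite -ltn_subRL.
have Hw' : ct_lab T (take k.+1 w ++ drop k.+1 w) = Some (pw, sw) by rewrite -Ewxd.
have [p0 [s0 [ux [Hx Hsx Hax Hst]]]] := seg G Hseg Hw' Esw Ha.
rewrite (take_nth 0%N Hk) in Hx.
have [Hv Hi] : ct_lab T (take k w) <> None /\ (nth 0%N w k < ct_nch T (take k w))%N.
  by apply: (lab_parent ct); rewrite Hx.
case Ev: (ct_lab T (take k w)) Hv => [[pv sv]|] // _.
have [u [sg [pr [st _ Hs0 Hpr Hir]]]] := child_step ct Ev Hx.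
have [Pb Hsv Ev' Av Hin] := st.
move/prefP: Hpre => [q Eq].
rewrite Hs0 Eq in Hsx.
have [Hanv [u0 [Hq Ha0 Hfl]]] := create_step (ok _ Pb) st Hsx Hax.
have [uw' [sgw [Pa Hsw Ew Aw]]] := step_data ct Hw Hn.
rewrite Esw in Hsw; case: Hsw => <- in Ew Aw.
have [Wv _] := inv_tree G Ev.
have [Ww _] := inv_tree G Hw.
rewrite Hr in Pa Ew.
have HPb : Pre ar dsym P a (ct_rule T (take k w)).
  apply: (edge_lemma (ok _ Pb) (ok _ Pa) Pb Wv Hsv Ev' Av Hin Hq Ha0 Ww Esw Ew Aw).
  by rewrite -Hfl.
have NSb : ~ S (ct_rule T (take k w)).
  by move=> Sb; have : (Pre ar dsym P a `&` S) (ct_rule T (take k w)) by []; rewrite HPre.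
split.
- exists pv, sv; split => //; first exact: leq_ltn_trans (leq0n _) Hi.
- exists q; split => //; rewrite -Hpr; exact: allpos_mem Hq.
Qed.

Lemma root_token (sym : finType) ar dsym (R : realType) (P : set (adp sym R)) T t0 w pw sw :
  good ar dsym P T t0 -> ct_lab T w = Some (pw, sw) -> annot_at sw (ct_pos T w) ->
  (forall k, (k < size w)%N -> ~~ pref (ct_pos T (take k w)) (ct_pos T w)) ->
  ct_pos T w = [::].
Proof.
move=> G Hw Han Hk; have [ct ok _ U _] := G.
rewrite /annot_at in Han; case Esw: (subt sw (ct_pos T w)) Han => [uw|] // Ha.
have Hseg : forall k, (k < size w)%N -> ~~ pref (ct_pos T ([::] ++ take k w)) (ct_pos T w) by [].
have [p0 [s0 [u0 [H0 Hs0 Ha0 _]]]] := seg G Hseg Hw Esw Ha.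
case: ct => H1 _ _; rewrite H1 in H0; case: H0 => _ E0; rewrite -E0 in Hs0.
apply/eqP; apply/negP => Hne; rewrite subt_sharp in Hs0; last by apply/negP.
have := unann_subt U Hs0; by case: (u0) Ha0 => // f c us /= -> /andP[].
Qed.

Local Close Scope ring_scope.
Local Close Scope classical_set_scope.
Local Open Scope classical_set_scope.
Local Open Scope ring_scope.

Lemma part_seq (R : realType) (K : eqType) (I : Type) (L : seq I) (key : I -> K) (U : seq K) (F : I -> R) :
  uniq U -> (forall x, List.In x L -> key x \in U) ->
  \sum_(x <- L) F x = \sum_(k <- U) \sum_(x <- L | key x == k) F x.
Proof.
move=> uU; elim: L => [|x L IH] HL.
- by rewrite big_nil big1 // => k _; rewrite big_nil.
- rewrite big_cons IH; last by move=> y Hy; apply: HL; right.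
  have Hx : key x \in U by apply: HL; left.
  rewrite [in RHS](bigD1_seq (key x)) //= big_cons eqxx -addrA; congr (_ + _).
  rewrite [in LHS](bigD1_seq (key x)) //=; congr (_ + _); apply: eq_bigr => k Hk.
  by rewrite big_cons eq_sym (negbTE Hk).
Qed.

Lemma node_prob_ge0 (sym : finType) ar dsym (R : realType) (P : set (adp sym R)) T t0 v :
  good ar dsym P T t0 -> 0 <= node_prob T v.
Proof. move=> G; rewrite /node_prob; case E: (ct_lab T v) => [[p s]|] //; exact: (inv_tree G E).2. Qed.

Lemma antichain (sym : finType) ar dsym (R : realType) (P : set (adp sym R)) T t0 n :
  good ar dsym P T t0 ->
  forall v p s (G : seq (seq nat)), ct_lab T v = Some (p, s) -> uniq G ->
  (forall w, w \in G -> exists e, w = v ++ e /\ (size e <= n)%N) ->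
  (forall w, w \in G -> ct_lab T w <> None) ->
  (forall w1 w2, w1 \in G -> w2 \in G -> pref w1 w2 -> w1 = w2) ->
  \sum_(w <- G) node_prob T w <= p.
Proof.
move=> Gd; have [ct ok _ _ _] := Gd.
have Hvin : forall v p s (G : seq (seq nat)), ct_lab T v = Some (p, s) -> uniq G -> v \in G ->
    (forall w, w \in G -> exists e, w = v ++ e) ->
    (forall w1 w2, w1 \in G -> w2 \in G -> pref w1 w2 -> w1 = w2) ->
    \sum_(w <- G) node_prob T w <= p.
  move=> v p s G Hv uG vG Hext Hac.
  have Hall : forall w, w \in G -> w = v.
    move=> w Hw; have [e Ee] := Hext _ Hw; apply/esym/Hac => //; rewrite Ee; exact: pref_cat.
  have Hsz : (size G <= 1)%N.
    have -> : (1 = size [:: v])%N by [].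
    by apply: uniq_leq_size => // w /Hall ->; rewrite inE.
  rewrite (eq_big_seq (fun _ => node_prob T v)); last by move=> w /Hall ->.
  rewrite big_const_seq count_predT /node_prob Hv.
  have [_ Hp] := inv_tree Gd Hv.
  by case: (size G) Hsz => [|[|]] //= _; rewrite ?addr0.
elim: n => [|n IHn] v p s G Hv uG Hext Hlab Hac.
- case: (boolP (v \in G)) => vG.
  + by apply: (Hvin _ _ _ _ Hv) => // w /Hext [e [Ee _]]; exists e.
  + rewrite big1_seq; first exact: (inv_tree Gd Hv).2.
    move=> w /andP[_ Hw]; have [e [Ee He]] := Hext _ Hw.
    by move: He; rewrite leqn0 size_eq0 => /eqP E0; rewrite Ee E0 cats0 in Hw; rewrite Hw in vG.
- case: (boolP (v \in G)) => vG.
  + by apply: (Hvin _ _ _ _ Hv) => // w /Hext [e [Ee _]]; exists e.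
  + have Hne : forall w, w \in G -> exists i e, w = rcons v i ++ e /\ (size e <= n)%N /\ (i < ct_nch T v)%N.
      move=> w Hw; have [[|i e] [Ee He]] := Hext _ Hw; first by rewrite Ee cats0 in Hw; rewrite Hw in vG.
      exists i, e; split; first by rewrite Ee -cats1 -catA.
      split => //; have := Hlab _ Hw; rewrite Ee -cat_rcons => /(lab_prefix ct) /(lab_parent ct) [] //.
    case: (boolP (0 < ct_nch T v)%N) => Hn; last first.
      rewrite big1_seq; first exact: (inv_tree Gd Hv).2.
      move=> w /andP[_ Hw]; have [i [e [_ [_ Hi]]]] := Hne _ Hw.
      by rewrite lt0n negbK in Hn; rewrite (eqP Hn) in Hi.
    have [Pa Hsz Hch] := child_probs ct Hv Hn.
    rewrite (@part_seq _ _ _ G (fun w => nth 0%N w (size v)) (iota 0 (ct_nch T v))) ?iota_uniq //; last first.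
      move=> w /(@In_nth_ex _ [::]) [j [Hj <-]]; have Hw := mem_nth [::] Hj.
      have [i [e [Ee [_ Hi]]]] := Hne _ Hw; rewrite Ee -cats1 -catA nth_cat ltnn subnn /=.
      by rewrite mem_iota.
    apply: (@le_trans _ _ (\sum_(k <- iota 0 (ct_nch T v)) node_prob T (rcons v k))).
    + rewrite big_seq [X in _ <= X]big_seq; apply: ler_sum => k; rewrite mem_iota add0n => /andP[_ Hk].
      rewrite -big_filter.
      have : ct_lab T (rcons v k) <> None by case: ct => _ H2 _; apply/H2; rewrite Hv.
      case Ec: (ct_lab T (rcons v k)) => [[pc sc]|] // _; rewrite /node_prob Ec.
      apply: (IHn _ _ _ _ Ec); first exact: filter_uniq.
      * move=> w; rewrite mem_filter => /andP[/eqP Hk' Hw]; have [i [e [Ee [He _]]]] := Hne _ Hw.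
        exists e; split => //; rewrite Ee; congr (rcons v _ ++ e).
        by rewrite -Hk' Ee -cats1 -catA nth_cat ltnn subnn.
      * by move=> w; rewrite mem_filter => /andP[_ /Hlab].
      * by move=> w1 w2; rewrite !mem_filter => /andP[_ H1] /andP[_ H2]; apply: Hac.
    + rewrite (eq_big_seq (fun k => p * (nth (0, Var 0) (rhs (ct_rule T v)) k).1)); last first.
        by move=> k; rewrite mem_iota add0n => /andP[_ Hk]; rewrite Hch.
      rewrite -mulr_sumr.
      have [_ _ _ _ Hsum] := ok _ Pa.
      rewrite (big_nth (0, Var 0)) in Hsum; rewrite -Hsz -[X in iota 0 X]subn0 -/(index_iota 0 _) Hsum mulr1 //.
Qed.

Local Close Scope ring_scope.
Local Close Scope classical_set_scope.
Local Open Scope classical_set_scope.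
Local Open Scope ring_scope.

Definition pk (sym : finType) (R : realType) (T : chain_tree sym R) (w : seq nat) (k : 'I_(size w)) :=
  pref (ct_pos T (take (nat_of_ord k) w)) (ct_pos T w).
Arguments pk {sym R} T w k.

Definition keyc (sym : finType) (R : realType) (T : chain_tree sym R) (w : seq nat) : option (seq nat) :=
  match [pick k : 'I_(size w) | pk T w k] with
  | None => None
  | Some k0 => Some (take (nat_of_ord [arg max_(k > k0 | pk T w k) nat_of_ord k]).+1 w)
  end.

Lemma keyc_spec (sym : finType) (R : realType) (T : chain_tree sym R) w :
  (keyc T w = None /\ forall k, (k < size w)%N -> ~~ pref (ct_pos T (take k w)) (ct_pos T w)) \/
  (exists k, [/\ (k < size w)%N, keyc T w = Some (take k.+1 w), pref (ct_pos T (take k w)) (ct_pos T w) &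
     forall k', (k < k')%N -> (k' < size w)%N -> ~~ pref (ct_pos T (take k' w)) (ct_pos T w)]).
Proof.
rewrite /keyc; case: pickP => [k0 Hk0|Hn].
- right; case: arg_maxnP => // km Hkm Hmax; exists km; split => //.
  move=> k' H1 H2; apply/negP => Hp.
  by have := Hmax (Ordinal H2) Hp; rewrite /= leqNgt H1.
- left; split => // k Hk; have := Hn (Ordinal Hk); by rewrite /pk /= => ->.
Qed.

Definition key (sym : finType) (R : realType) (T : chain_tree sym R) (w : seq nat) := (keyc T w, ct_pos T w).

Definition par (c : seq nat) := take (size c).-1 c.

Definition bnd (sym : finType) (R : realType) (T : chain_tree sym R) (k : option (seq nat) * seq nat) : R :=
  if k.1 is Some c then node_prob T (par c) else 1.

Definition weight (sym : finType) (R : realType) (b : adp sym R) : nat :=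
  sumn [seq size (allpos (nth (0, Var 0) (rhs b) i).2) | i <- iota 0 (size (rhs b))].

Definition KL (sym : finType) (R : realType) (T : chain_tree sym R) (v : seq nat) :=
  [seq (Some (rcons v i), ct_pos T v ++ q) | i <- iota 0 (size (rhs (ct_rule T v))),
     q <- allpos (nth (0, Var 0) (rhs (ct_rule T v)) i).2].

Lemma size_KL (sym : finType) (R : realType) (T : chain_tree sym R) v : size (KL T v) = weight (ct_rule T v).
Proof. by rewrite /KL size_allpairs_dep. Qed.

Lemma In_mem (T : eqType) (x : T) s : List.In x s -> x \in s.
Proof. elim: s => [|y s IH] //= [->|/IH H]; rewrite inE ?eqxx // H orbT //. Qed.

Lemma pair_contra (sym : finType) (R : realType) (T : chain_tree sym R) w1 w2 :
  key T w1 = key T w2 -> pref w1 w2 -> w1 <> w2 ->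
  (forall k, (k < size w1)%N -> (forall k', (k < k')%N -> (k' < size w2)%N -> ~~ pref (ct_pos T (take k' w2)) (ct_pos T w2)) -> False) /\
  (~ forall k, (k < size w2)%N -> ~~ pref (ct_pos T (take k w2)) (ct_pos T w2)).
Proof.
move=> [_ Ep] /prefP [e Ee] Hne.
have He : e != [::] by apply/negP => /eqP E0; apply: Hne; rewrite Ee E0 cats0.
have Hsz : (size w1 < size w2)%N by rewrite Ee size_cat -{1}[size w1]addn0 ltn_add2l lt0n size_eq0.
have Hp : pref (ct_pos T (take (size w1) w2)) (ct_pos T w2) by rewrite Ee take_size_cat // -Ee -Ep /pref take_size.
split.
- move=> k Hk Hmax; have := Hmax _ Hk Hsz; by rewrite Hp.
- move=> H; have := H _ Hsz; by rewrite Hp.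
Qed.

Lemma par_take (w : seq nat) k : (k < size w)%N -> par (take k.+1 w) = take k w.
Proof. move=> Hk; rewrite /par size_takel // take_takel //. Qed.

Lemma key_info (sym : finType) ar dsym (R : realType) (P S : set (adp sym R)) a T t0 w :
  good ar dsym P T t0 -> Pre ar dsym P a `&` S = set0 ->
  counted S T w -> ct_rule T w = a ->
  (keyc T w = None -> ct_pos T w = [::]) /\
  (forall c, keyc T w = Some c -> counted (P `\` S) T (par c) /\ (Some c, ct_pos T w) \in KL T (par c)).
Proof.
move=> G HPre [p [s [Hw Hn _ Han]]] Hr.
case: (keyc_spec T w) => [[E H]|[k [Hk E Hp Hmax]]].
- split; first by move=> _; exact: root_token G Hw Han H.
  by rewrite E.
- split; rewrite E // => c [<-].
  have [Hc [q [Eq Hq Hi]]] := creator_counted G HPre Hw Hn Hr Han Hk Hp Hmax.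
  rewrite par_take //; split => //.
  apply/allpairsPdep; exists (nth 0%N w k), q; split => //; first by rewrite mem_iota.
  by rewrite (take_nth 0%N Hk) Eq.
Qed.

Lemma group_bound (sym : finType) ar dsym (R : realType) (P S : set (adp sym R)) a T t0 (L : seq (seq nat)) k :
  good ar dsym P T t0 -> uniq L ->
  (forall w, w \in L -> counted S T w /\ ct_rule T w = a) ->
  \sum_(w <- L | key T w == k) node_prob T w <= bnd T k.
Proof.
move=> G uL HL; have [ct ok _ _ _] := G.
rewrite -big_filter; set Gk := seq.filter _ L.
have HGk : forall w, w \in Gk -> key T w = k /\ w \in L by move=> w; rewrite mem_filter => /andP[/eqP].
have Hlab : forall w, w \in Gk -> ct_lab T w <> None.
  by move=> w /HGk [_ /HL [[p [s [-> _ _ _]]] _]].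
have uG : uniq Gk by exact: filter_uniq.
set n := \big[maxn/0%N]_(w <- L) size w.
have Hszn : forall w, w \in Gk -> (size w <= n)%N by move=> w /HGk [_ Hw]; exact: leq_bigmax_seq.
move: Gk HGk Hlab uG Hszn; case: k => [[c|] pi] Gk HGk Hlab uG Hszn.
-
  case: (boolP (Gk == [::])) => [/eqP ->|]; first by rewrite big_nil /bnd; exact: node_prob_ge0 G.
  case: Gk HGk Hlab uG Hszn => [|w0 Gk'] // HGk Hlab uG Hszn _.
  set Gk := w0 :: Gk'.
  have Hspec : forall w, w \in Gk -> exists kw, [/\ (kw < size w)%N, c = take kw.+1 w &
      forall k', (kw < k')%N -> (k' < size w)%N -> ~~ pref (ct_pos T (take k' w)) (ct_pos T w)].
    move=> w Hw; have [Hk _] := HGk _ Hw; case: (keyc_spec T w) => [[E _]|[kw [H1 E _ H4]]].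
    + by move: Hk; rewrite /key E.
    + by exists kw; split => //; move: Hk; rewrite /key E => -[].
  have [k0 [Hk0 Ec _]] := Hspec _ (mem_head _ _).
  have Hc : ct_lab T c <> None.
    apply: (lab_prefix (d := drop k0.+1 w0) ct); rewrite Ec cat_take_drop; apply: Hlab; exact: mem_head.
  case Ecl: (ct_lab T c) Hc => [[pc sc]|] // _.
  apply: (@le_trans _ _ pc).
  + apply: (antichain (n := n) G Ecl uG).
    * move=> w Hw; have [kw [H1 H2 _]] := Hspec _ Hw; exists (drop kw.+1 w); split; first by rewrite H2 cat_take_drop.
      by rewrite size_drop; apply: leq_trans (leq_subr _ _) (Hszn _ Hw).
    * exact: Hlab.
    * move=> w1 w2 H1 H2 Hpr; case: (eqVneq w1 w2) => // Hne.
      have [k1 [Hk1 Ec1 _]] := Hspec _ H1; have [k2 [Hk2 Ec2 Hmax2]] := Hspec _ H2.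
      have Hk12 : k2 = k1.
        by have := congr1 size (etrans (esym Ec1) Ec2); rewrite !size_takel // => -[].
      have [C _] := pair_contra (etrans (HGk _ H1).1 (esym (HGk _ H2).1)) Hpr (elimN eqP Hne).
      by exfalso; apply: (C k2) => //; rewrite Hk12.
  + rewrite /bnd /= Ec par_take //.
    rewrite Ec (take_nth 0%N Hk0) in Ecl.
    have [Hv Hi] : ct_lab T (take k0 w0) <> None /\ (nth 0%N w0 k0 < ct_nch T (take k0 w0))%N.
      by apply: (lab_parent ct); rewrite Ecl.
    case Ev: (ct_lab T (take k0 w0)) Hv => [[pv sv]|] // _.
    have [Pb Hsz Hch] := child_probs ct Ev (leq_ltn_trans (leq0n _) Hi).
    have := Hch _ Hi; rewrite /node_prob Ecl Ev => ->.
    apply: ler_piMr; first exact: (inv_tree G Ev).2.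
    have [_ _ _ Hr _] := ok _ Pb.
    by have [_ ? _ _] := Hr _ (In_nth (0, Var 0) (eq_ind_r (fun x => (_ < x)%N) Hi Hsz)).
-
  rewrite /bnd /=.
  have Hr : ct_lab T [::] = Some (1, sharp t0) by case: ct.
  apply: (antichain (n := n) G Hr uG) => //.
  + by move=> w Hw; exists w; split => //; exact: Hszn.
  + move=> w1 w2 H1 H2 Hpr; case: (eqVneq w1 w2) => // Hne.
    have [_ C] := pair_contra (etrans (HGk _ H1).1 (esym (HGk _ H2).1)) Hpr (elimN eqP Hne).
    exfalso; case: (keyc_spec T w2) => [[_ H]|[kw [_ E _ _]]]; first exact: C.
    by have := (HGk _ H2).1; rewrite /key E.
Qed.

Lemma sum_const_count (R : realType) (I : Type) (s : seq I) (p : pred I) (x : R) :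
  \sum_(i <- s | p i) x = x * (count p s)%:R.
Proof.
elim: s => [|y s IH]; first by rewrite big_nil mulr0.
rewrite big_cons /= IH; case: (p y) => /=; last by rewrite add0n.
by rewrite natrD mulrDr mulr1 addrC.
Qed.

Lemma alpha_bound (sym : finType) ar dsym (R : realType) (P S : set (adp sym R)) a T t0 (B : nat) (L : seq (seq nat)) :
  good ar dsym P T t0 -> Pre ar dsym P a `&` S = set0 ->
  (forall b, P b -> (weight b <= B)%N) -> uniq L ->
  (forall w, w \in L -> counted S T w /\ ct_rule T w = a) ->
  exists L', [/\ uniq L', (forall v, v \in L' -> counted (P `\` S) T v) &
     \sum_(w <- L) node_prob T w <= 1 + B%:R * \sum_(v <- L') node_prob T v].
Proof.
move=> G HPre HB uL HL.
set U := undup (map (key T) L).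
have HU : forall k, k \in U -> exists w, w \in L /\ k = key T w.
  by move=> k; rewrite mem_undup => /mapP [w Hw ->]; exists w.
set SK := [seq k <- U | k.1 != None].
set L' := undup (map (fun k => par (odflt [::] k.1)) SK).
have HSK : forall k, k \in SK -> exists w c, [/\ w \in L, k = key T w, keyc T w = Some c &
                     counted (P `\` S) T (par c) /\ k \in KL T (par c)].
  move=> k; rewrite mem_filter => /andP[Hk /HU [w [Hw Ek]]].
  have [Hc Ha] := HL _ Hw; have [_ H2] := key_info G HPre Hc Ha.
  move: Hk; rewrite Ek /key /=; case E: (keyc T w) => [c|] // _.
  by exists w, c; split => //; [rewrite E | apply: H2].
have HL' : forall v, v \in L' -> counted (P `\` S) T v.
  move=> v; rewrite mem_undup => /mapP [k /HSK [w [c [_ -> E [Hc _]]]] ->]; by rewrite /key /= E.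
exists L'; split => //; first exact: undup_uniq.
rewrite (@part_seq _ _ _ L (key T) U); last first.
  by move=> w /In_mem Hw; rewrite mem_undup map_f.
  exact: undup_uniq.
apply: (@le_trans _ _ (\sum_(k <- U) bnd T k)).
  by apply: ler_sum => k _; exact: group_bound G uL HL.
rewrite (bigID (fun k => k.1 == None)) /=; apply: lerD.
- rewrite -big_filter.
  have Hsub : {subset [seq k <- U | k.1 == None] <= [:: (None, [::])]}.
    move=> k; rewrite mem_filter => /andP[/eqP Hk /HU [w [Hw Ek]]].
    have [Hc Ha] := HL _ Hw; have [H1 _] := key_info G HPre Hc Ha.
    move: Hk; rewrite Ek /key /= => E; by rewrite E H1 // inE.
  have := uniq_leq_size (filter_uniq _ (undup_uniq _)) Hsub.
  have Hall : forall k, k \in [seq k <- U | k.1 == None] -> bnd T k = 1.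
    by move=> k; rewrite mem_filter => /andP[/eqP Hk _]; rewrite /bnd Hk.
  case: [seq k <- U | k.1 == None] Hall => [|x [|y l]] //= Hall _.
  + by rewrite big_nil ler01.
  + by rewrite big_seq1 Hall // inE.
- rewrite -big_filter -/SK.
  rewrite (eq_big_seq (fun k => node_prob T (par (odflt [::] k.1)))); last first.
    by move=> k /HSK [w [c [_ -> E _]]]; rewrite /bnd /key /= E.
  rewrite (@part_seq _ _ _ SK (fun k => par (odflt [::] k.1)) L'); last first.
    by move=> k /In_mem Hk; rewrite mem_undup (map_f (fun k => par (odflt [::] k.1)) Hk).
    exact: undup_uniq.
  rewrite mulr_sumr big_seq [X in _ <= X]big_seq; apply: ler_sum => v Hv; have Hcv := HL' _ Hv.
  rewrite (eq_bigr (fun _ => node_prob T v)); last by move=> k /eqP ->.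
  rewrite sum_const_count [X in _ <= X]mulrC; apply: ler_wpM2l; first exact: node_prob_ge0 G.
  rewrite ler_nat -size_filter.
  have [p [s [_ _ [Pb _] _]]] := Hcv.
  apply: leq_trans (HB _ Pb); rewrite -size_KL.
  apply: uniq_leq_size; first by apply: filter_uniq; apply: filter_uniq; exact: undup_uniq.
  move=> k; rewrite mem_filter => /andP[/eqP Ev /HSK [w [c [_ Ek E [_ HK]]]]].
  have Hk1 : k.1 = Some c by rewrite Ek /key /= E.
  by rewrite -Ev Hk1 /=.
Qed.

Local Close Scope ring_scope.
Local Close Scope classical_set_scope.
Local Open Scope classical_set_scope.
Local Open Scope ring_scope.

Lemma weight_bound (sym : finType) (R : realType) (P : set (adp sym R)) :
  finite_set P -> exists B, forall b, P b -> (weight b <= B)%N.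
Proof.
move=> /(finite_image (@weight sym R)) /finite_seqP [s Es].
exists (\big[maxn/0%N]_(x <- s) x) => b Pb.
have : [set` s] (weight b) by rewrite -Es; exists b.
by move=> /= Hb; exact: (@leq_bigmax_seq _ s xpredT (fun x => x) _ Hb isT).
Qed.

Local Open Scope ereal_scope.

Lemma edl_split (sym : finType) ar dsym (R : realType) (P S X Y : set (adp sym R)) a T t0 (B : nat) :
  good ar dsym P T t0 -> Pre ar dsym P a `&` S = set0 -> S a ->
  (forall b, P b -> (weight b <= B)%N) ->
  (forall b, X b -> b <> a -> Y b) ->
  edl X T <= edl Y T + (1 + B%:R%:E * edl (P `\` S) T).
Proof.
move=> G HPre Sa HB HXY; apply: ge_ereal_sup => _ [l [ul Hl] <-].
pose p := fun v : seq nat => `[< ct_rule T v = a >].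
rewrite (bigID (fun v => ~~ p v)) /=; apply: leeD.
- rewrite -big_filter; apply: ereal_sup_ubound; exists [seq v <- l | ~~ p v] => //; split.
  + exact: filter_uniq.
  + move=> v; rewrite mem_filter => /andP[Hp /Hl [q [s [H1 H2 H3 H4]]]].
    exists q, s; split => //; apply: HXY => // E; move: Hp; rewrite /p; by rewrite asboolT.
- under eq_bigl do rewrite negbK.
  rewrite -big_filter sumEFin.
  have HLp : forall w, w \in [seq v <- l | p v] -> counted S T w /\ ct_rule T w = a.
    move=> w; rewrite mem_filter => /andP[Hp /Hl [q [s [H1 H2 H3 H4]]]].
    have Ea : ct_rule T w = a by move: Hp; rewrite /p => /asboolP.
    split => //; exists q, s; split => //; by rewrite Ea.
  have [L' [uL' HL' Hle]] := alpha_bound G HPre HB (filter_uniq _ ul) HLp.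
  apply: (@le_trans _ _ (1 + B%:R * \sum_(v <- L') node_prob T v)%R%:E); first by rewrite lee_fin.
  rewrite EFinD EFinM; apply: leeD2l; apply: lee_wpmul2l; first by rewrite lee_fin.
  rewrite -sumEFin; apply: ereal_sup_ubound; by exists L'.
Qed.

Lemma edh_split (sym : finType) ar dsym (R : realType) (P S X Y : set (adp sym R)) a (B : nat) t :
  (forall b, P b -> adp_ok ar dsym b) -> Pre ar dsym P a `&` S = set0 -> S a ->
  (forall b, P b -> (weight b <= B)%N) ->
  (forall b, X b -> b <> a -> Y b) -> basic ar dsym P t ->
  edh P X t <= edh P Y t + (1 + B%:R%:E * edh P (P `\` S) t).
Proof.
move=> ok HPre Sa HB HXY [W U [f [ts [Et _ _]]]].
apply: ge_ereal_sup => _ [T HT <-].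
have G : good ar dsym P T t by split => //; exists f, ts.
apply: le_trans (edl_split G HPre Sa HB HXY) _.
apply: leeD; first by apply: ereal_sup_ubound; exists T.
apply: leeD2l; apply: lee_wpmul2l; first by rewrite lee_fin.
by apply: ereal_sup_ubound; exists T.
Qed.

Definition fE (sym : finType) ar dsym (R : realType) (P Z : set (adp sym R)) (n : nat) : \bar R :=
  ereal_sup [set edh P Z t | t in [set t | basic ar dsym P t /\ (Defs.tsize t <= n)%N]].

Lemma fE_split (sym : finType) ar dsym (R : realType) (P S X Y : set (adp sym R)) a (B : nat) n :
  (forall b, P b -> adp_ok ar dsym b) -> Pre ar dsym P a `&` S = set0 -> S a ->
  (forall b, P b -> (weight b <= B)%N) ->
  (forall b, X b -> b <> a -> Y b) ->
  fE ar dsym P X n <= fE ar dsym P Y n + (1 + B%:R%:E * fE ar dsym P (P `\` S) n).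
Proof.
move=> ok HPre Sa HB HXY; apply: ge_ereal_sup => _ [t [Hb Hs] <-].
apply: le_trans (edh_split ok HPre Sa HB HXY Hb) _.
apply: leeD; first by apply: ereal_sup_ubound; exists t.
apply: leeD2l; apply: lee_wpmul2l; first by rewrite lee_fin.
by apply: ereal_sup_ubound; exists t.
Qed.

Lemma fE_mono (sym : finType) ar dsym (R : realType) (P Z : set (adp sym R)) n m :
  (n <= m)%N -> fE ar dsym P Z n <= fE ar dsym P Z m.
Proof.
move=> Hnm; apply: ereal_sup_le => _ [t [Hb Hs] <-]; exists t => //; split => //.
exact: leq_trans Hs Hnm.
Qed.

Local Close Scope ereal_scope.
Local Close Scope ring_scope.
Local Close Scope classical_set_scope.
Local Open Scope ring_scope.

Definition inC (R : realType) (c : cplx) (f : nat -> \bar R) : Prop :=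
  match c with
  | Pol a => inPol a f
  | CExp => inExp f
  | C2Exp => in2Exp f
  | CFin => inFin f
  | COmega => True
  end.

Lemma iota_in (R : realType) (f : nat -> \bar R) : inC (Defs.iota f) f.
Proof.
rewrite /Defs.iota; case: pselect => [H|H] /=.
- by case: ex_minnP => m /asboolP.
- case: ifP => [/asboolP //|_]; case: ifP => [/asboolP //|_]; case: ifP => [/asboolP //|_] //.
Qed.

Lemma iota_least (R : realType) (f : nat -> \bar R) c : inC c f -> cle (Defs.iota f) c.
Proof.
rewrite /Defs.iota; case: pselect => [H|H].
- case: ex_minnP => m Hm Hmin; case: c => [a||||] //= Ha.
  by apply: Hmin; apply/asboolP.
- case: c => [a||||] /= Hc.
  + by exfalso; apply: H; exists a.
  + by rewrite (asboolT Hc).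
  + by case: ifP => // _; rewrite (asboolT Hc).
  + by case: ifP => // _; case: ifP => // _; rewrite (asboolT Hc).
  + by case: ifP => // _; case: ifP => // _; case: ifP.
Qed.

Fixpoint padd (p q : seq nat) : seq nat :=
  match p, q with
  | [::], q => q
  | p, [::] => p
  | a :: p', b :: q' => (a + b)%N :: padd p' q'
  end.

Lemma polyval_padd p q n : polyval (padd p q) n = (polyval p n + polyval q n)%N.
Proof.
elim: p q => [|a p IH] [|b q] //=; first by rewrite addn0.
by rewrite IH mulnDr; lia.
Qed.

Local Open Scope ereal_scope.

Lemma bigO_close (R : realType) (f g1 g2 : nat -> \bar R) (K : nat) (h1 h2 h : nat -> R) (N0 : nat) :
  (forall n, (N0 <= n)%N -> [/\ (0 <= h1 n)%R, (h1 n <= h n)%R, (0 <= h2 n)%R, (h2 n <= h n)%R & (1 <= h n)%R]) ->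
  bigO g1 h1 -> bigO g2 h2 -> (forall n, f n <= g1 n + (1 + K%:R%:E * g2 n)) -> bigO f h.
Proof.
move=> Hh [c1 [N1 H1]] [c2 [N2 H2]] Hf.
exists (`|c1| + 1 + K%:R * `|c2|)%R, (maxn N0 (maxn N1 N2)) => n.
rewrite !geq_max => /andP[Hn0 /andP[Hn1 Hn2]].
have [h1p h1h h2p h2h hge1] := Hh n Hn0.
apply: le_trans (Hf n) _.
apply: (@le_trans _ _ ((c1 * h1 n)%R%:E + ((1%R)%:E + K%:R%:E * (c2 * h2 n)%R%:E))).
  apply: leeD; first exact: H1.
  apply: leeD2l; apply: lee_wpmul2l; [by rewrite lee_fin | exact: H2].
rewrite -EFinM.
have -> : (c1 * h1 n)%:E + (1 + (K%:R * (c2 * h2 n))%:E) = ((c1 * h1 n) + (1 + K%:R * (c2 * h2 n)))%R%:E by [].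
rewrite lee_fin.
have Kp : (0 <= K%:R :> R)%R by [].
have e1 : (c1 * h1 n <= `|c1| * h n)%R.
  apply: le_trans (_ : `|c1| * h1 n <= _)%R; first by apply: ler_wpM2r => //; exact: ler_norm.
  by apply: ler_wpM2l.
have e2 : (c2 * h2 n <= `|c2| * h n)%R.
  apply: le_trans (_ : `|c2| * h2 n <= _)%R; first by apply: ler_wpM2r => //; exact: ler_norm.
  by apply: ler_wpM2l.
have e3 : (K%:R * (c2 * h2 n) <= K%:R * (`|c2| * h n))%R by apply: ler_wpM2l.
have Hc2 : (0 <= `|c2|)%R by [].
have Hc1 : (0 <= `|c1|)%R by [].
rewrite !mulrDl mul1r -mulrA.
lra.
Qed.

Lemma fin_helper (R : realType) (x y z : \bar R) (K : nat) :
  x != +oo -> y != +oo -> z <= x + (1 + K%:R%:E * y) -> z != +oo.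
Proof.
move=> Hx Hy Hz; apply/negP => /eqP Ez; move: Hz; rewrite Ez leye_eq.
case: x Hx => [r1| |] // _; case: y Hy => [r2| |] // _;
  case: (eqVneq K 0%N) => [->|HK]; rewrite ?mul0e //;
  rewrite mulrNy gtr0_sg ?ltr0n ?lt0n // mul1e //.
Qed.

Lemma bigO_weaken (R : realType) (g : nat -> \bar R) (h h' : nat -> R) (N0 : nat) :
  (forall n, (N0 <= n)%N -> (0 <= h n)%R /\ (h n <= h' n)%R) -> bigO g h -> bigO g h'.
Proof.
move=> Hh [c [N H]]; exists (`|c|)%R, (maxn N N0) => n; rewrite geq_max => /andP[H1 H2].
apply: le_trans (H n H1) _; rewrite lee_fin; have [h0 hh] := Hh n H2.
apply: le_trans (_ : `|c| * h n <= _)%R; first by apply: ler_wpM2r => //; exact: ler_norm.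
by apply: ler_wpM2l.
Qed.

Lemma pow_le_2exp n a : (n ^ a <= 2 ^ (n * a))%N.
Proof.
elim: a => [|a IH]; first by rewrite muln0.
rewrite mulnS expnD expnS; apply: leq_mul => //; apply: ltnW; exact: ltn_expl.
Qed.

Definition mono (R : realType) (g : nat -> \bar R) := forall n m, (n <= m)%N -> g n <= g m.

Lemma pol_pol (R : realType) (g : nat -> \bar R) a b : (a <= b)%N -> inPol a g -> inPol b g.
Proof.
move=> Hab; apply: (bigO_weaken (N0 := 1%N)) => n Hn; rewrite -!natrX ler_nat ler0n; split => //.
exact: leq_pexp2l.
Qed.

Lemma pol_exp (R : realType) (g : nat -> \bar R) a : inPol a g -> inExp g.
Proof.
move=> H; exists [:: 0%N; a]; apply: (bigO_weaken (N0 := 0%N)) H => n _.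
rewrite -!natrX ler_nat ler0n; split => //=; rewrite muln0 addn0 add0n; exact: pow_le_2exp.
Qed.

Lemma exp_2exp (R : realType) (g : nat -> \bar R) : inExp g -> in2Exp g.
Proof.
move=> [p H]; exists p; apply: (bigO_weaken (N0 := 0%N)) H => n _.
rewrite -!natrX ler_nat ler0n; split => //; apply: leq_pexp2l => //; apply: ltnW; exact: ltn_expl.
Qed.

Lemma exp2_fin (R : realType) (g : nat -> \bar R) : mono g -> in2Exp g -> inFin g.
Proof.
move=> Hm [p [c [N H]]] n; apply/negP => /eqP E.
have := le_trans (Hm n (maxn n N) (leq_maxl _ _)) (H _ (leq_maxr _ _)).
by rewrite E leye_eq.
Qed.

Lemma nest (R : realType) (g : nat -> \bar R) c d : mono g -> cle c d -> inC c g -> inC d g.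
Proof.
move=> Hm; case: c => [a||||]; case: d => [b||||] //= Hcd Hg.
- exact: pol_pol Hcd Hg.
- exact: pol_exp Hg.
- exact: exp_2exp (pol_exp Hg).
- exact: exp2_fin Hm (exp_2exp (pol_exp Hg)).
- exact: exp_2exp Hg.
- exact: exp2_fin Hm (exp_2exp Hg).
- exact: exp2_fin Hm Hg.
Qed.

Lemma closure (R : realType) (f g1 g2 : nat -> \bar R) (K : nat) c :
  (forall n, f n <= g1 n + (1 + K%:R%:E * g2 n)) -> inC c g1 -> inC c g2 -> inC c f.
Proof.
move=> Hf; case: c => [a||||] /=.
- move=> H1 H2; apply: (bigO_close (N0 := 1%N) _ H1 H2 Hf) => n Hn.
  by rewrite -natrX ler0n lexx ler1n expn_gt0 Hn.
- move=> [p1 H1] [p2 H2]; exists (padd p1 p2).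
  apply: (bigO_close (N0 := 0%N) _ H1 H2 Hf) => n _ /=.
  rewrite -!natrX !ler0n !ler_nat ler1n expn_gt0 /= polyval_padd; split => //; apply: leq_pexp2l => //.
  + exact: leq_addr.
  + exact: leq_addl.
- move=> [p1 H1] [p2 H2]; exists (padd p1 p2).
  apply: (bigO_close (N0 := 0%N) _ H1 H2 Hf) => n _ /=.
  rewrite -!natrX !ler0n !ler_nat ler1n expn_gt0 /= polyval_padd; split => //; apply: leq_pexp2l => //;
    apply: leq_pexp2l => //.
  + exact: leq_addr.
  + exact: leq_addl.
- move=> H1 H2 n; exact: fin_helper (H1 n) (H2 n) (Hf n).
- by [].
Qed.

Lemma cle_refl c : cle c c. Proof. by case: c => //= a; rewrite leqnn. Qed.
Lemma cle_trans c d e : cle c d -> cle d e -> cle c e.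
Proof. by case: c => [a||||]; case: d => [b||||]; case: e => [k||||] //=; apply: leq_trans. Qed.
Lemma cle_total c d : cle c d || cle d c.
Proof. by case: c => [a||||]; case: d => [b||||] //=; apply: leq_total. Qed.
Lemma cle_maxl c d : cle c (cmax c d).
Proof. rewrite /cmax; case: ifP => // _; exact: cle_refl. Qed.
Lemma cle_maxr c d : cle d (cmax c d).
Proof. rewrite /cmax; case: ifP => [_|H]; first exact: cle_refl. by have := cle_total c d; rewrite H. Qed.
Lemma cmax_lub c d e : cle c e -> cle d e -> cle (cmax c d) e.
Proof. by rewrite /cmax; case: ifP. Qed.
Lemma cle_pol0 c : cle (Pol 0) c. Proof. by case: c. Qed.

Lemma iota_close (R : realType) (f g1 g2 : nat -> \bar R) (K : nat) :
  mono g1 -> mono g2 -> (forall n, f n <= g1 n + (1 + K%:R%:E * g2 n)) ->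
  cle (Defs.iota f) (cmax (Defs.iota g1) (Defs.iota g2)).
Proof.
move=> M1 M2 Hf; apply: iota_least; apply: (closure Hf).
- exact: nest M1 (cle_maxl _ _) (iota_in g1).
- exact: nest M2 (cle_maxr _ _) (iota_in g2).
Qed.

Local Close Scope ereal_scope.
Local Close Scope ring_scope.
Unset Implicit Arguments.
Local Open Scope classical_set_scope.

Theorem mainTheorem8 (sym : finType) (ar : sym -> nat) (dsym : pred sym)
  (R : realType) (P S : set (adp sym R)) (a : adp sym R) :
  problem_ok ar dsym P S ->
  S a ->
  Pre ar dsym P a `&` S = set0 ->
  sound_output ar dsym P S (Pol 0) [:: (P, S `\ a)].
Proof.
move=> [finP SsubP okP] Sa HPre T HT WF v c' ch Hv.
have [B HB] := weight_bound finP.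
have [_ H2] := WF v P S c' ch Hv.
have E : forall X, iota_prob ar dsym P X = Defs.iota (fE ar dsym P X) by [].
have H2' : cle (iota_prob ar dsym P (P `\` S)) (cmax (anc T v) (Pol 0)).
  exact: cle_trans H2 (cle_maxl _ _).
split.
- rewrite /= !E.
  have HXY : forall b, S b -> b <> a -> (S `\ a) b by move=> b Sb Hb; split => // /= Eb; apply: Hb.
  have H1 := iota_close (K := B) (@fE_mono _ ar dsym _ P (S `\ a)) (@fE_mono _ ar dsym _ P (P `\` S))
               (fun n => fE_split n okP HPre Sa HB HXY).
  apply: cle_trans H1 _; apply: cmax_lub; first exact: cle_maxl.
  apply: cle_trans (cle_maxr (Defs.iota (fE ar dsym P (S `\ a))) _); rewrite -E; exact: H2'.
- move=> Pi Si [[<- <-]|[]].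
  rewrite E.
  have HXY : forall b, (P `\` (S `\ a)) b -> b <> a -> (P `\` S) b.
    by move=> b [Pb NS] Hb; split => // Sb; apply: NS; split => // /= Eb; apply: Hb.
  have H1 := iota_close (K := B) (@fE_mono _ ar dsym _ P (P `\` S)) (@fE_mono _ ar dsym _ P (P `\` S))
               (fun n => fE_split n okP HPre Sa HB HXY).
  apply: cle_trans H1 _; apply: cmax_lub; rewrite -E; exact: H2'.
Qed.
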